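(* Let $\Delta$ be the finite-difference Laplacian on $\mathbb{Z}$, $\Delta f(n)=f(n+1)+f(n-1)-2f(n)$. There is $\delta>0$ such that for every $t\ge0$ one can choose complex numbers $(a_j)_{j\in\mathbb{Z}}$ with $|a_j|\le1$ so that, with $\psi_0=\sum_{j}a_j\delta_j$ and $\psi(t,n)=(e^{it\Delta}\psi_0)(n)$, $$|\psi(t,0)|\ge\delta\,t^{1/2}.$$
   Context: $\delta_j$ denotes the Kronecker delta function on $\mathbb{Z}$ supported at $j$; $e^{it\Delta}$ is the (bounded, unitary on $\ell^2$) linear Schrödinger evolution on $\mathbb{Z}$, applied to bounded sequences via its kernel. *)

(* Defs.v *)
From Stdlib Require Import Reals ZArith.
From Coquelicot Require Import Coquelicot.
Open Scope R_scope.

(* Kernel of e^{it Delta} on Z, Delta f(n) = f(n+1)+f(n-1)-2f(n), whose Fourier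
   symbol is 2cos(theta)-2:
     K t m = (e^{it Delta} delta_0)(m)
           = (1/(2 pi)) \int_{-pi}^{pi} e^{i t (2 cos th - 2)} e^{i m th} dth. *)
Definition schr_kernel (t : R) (m : Z) : C :=
  (/ (2 * PI) * RInt (fun th => cos (t * (2 * cos th - 2) + IZR m * th)) (- PI) PI,
   / (2 * PI) * RInt (fun th => sin (t * (2 * cos th - 2) + IZR m * th)) (- PI) PI).

(* schr_value a t n v : v = (e^{it Delta} psi0)(n) where psi0 = sum_j a_j delta_j,
   i.e. v = sum_{j in Z} a_j K t (n - j), the two-sided series being split into
   j >= 0 and j < 0 (it converges absolutely for bounded a). *)
Definition schr_value (a : Z -> C) (t : R) (n : Z) (v : C) : Prop :=
  exists l1 l2 : C,
    is_series (fun k : nat => Cmult (a (Z.of_nat k)) (schr_kernel t (n - Z.of_nat k)%Z)) l1 /\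
    is_series (fun k : nat => Cmult (a (- (Z.of_nat k + 1))%Z)
                                    (schr_kernel t (n + (Z.of_nat k + 1))%Z)) l2 /\
    v = Cplus l1 l2.

(* Main.v *)
Require Import Defs.
From Stdlib Require Import Reals ZArith Lra Lia Psatz FunctionalExtensionality.
From Coquelicot Require Import Coquelicot.
Open Scope R_scope.
Ltac req := match goal with |- @eq _ ?a ?b => change (@eq R a b) end; ring.
Ltac req2 := match goal with |- @eq _ ?a ?b => change (@eq R a b) end; unfold Rminus; ring.

Ltac ceq := apply injective_projections; simpl; try ring.

Definition E (x : R) : C := (cos x, sin x).

Lemma cR_plus (f g : R -> R) (x : R) : continuous f x -> continuous g x -> continuous (fun y => f y + g y) x.
Proof. intros; exact (continuous_plus f g x H H0). Qed.
Lemma cR_mult (f g : R -> R) (x : R) : continuous f x -> continuous g x -> continuous (fun y => f y * g y) x.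
Proof. intros; exact (continuous_mult f g x H H0). Qed.
Lemma cR_opp (f : R -> R) (x : R) : continuous f x -> continuous (fun y => - f y) x.
Proof. intros; exact (continuous_opp f x H). Qed.
Lemma cR_minus (f g : R -> R) (x : R) : continuous f x -> continuous g x -> continuous (fun y => f y - g y) x.
Proof. intros. apply cR_plus; auto. apply cR_opp; auto. Qed.
Lemma cR_const (c : R) (x : R) : continuous (fun _ => c) x.
Proof. apply continuous_const. Qed.
Lemma cR_id (x : R) : continuous (fun y : R => y) x.
Proof. apply continuous_id. Qed.
Lemma cR_cos (f : R -> R) (x : R) : continuous f x -> continuous (fun y => cos (f y)) x.
Proof. intros; apply continuous_cos_comp; auto. Qed.
Lemma cR_sin (f : R -> R) (x : R) : continuous f x -> continuous (fun y => sin (f y)) x.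
Proof. intros; apply continuous_sin_comp; auto. Qed.
Lemma cR_pow (f : R -> R) n (x : R) : continuous f x -> continuous (fun y => f y ^ n) x.
Proof. intros H. induction n; simpl. apply cR_const. apply cR_mult; auto. Qed.

Definition cc (h : R -> C) : Prop :=
  forall x, continuous (fun y => fst (h y)) x /\ continuous (fun y => snd (h y)) x.

Lemma cc_plus h g : cc h -> cc g -> cc (fun x => h x + g x)%C.
Proof. intros H1 H2 x; destruct (H1 x), (H2 x); simpl; split; apply cR_plus; auto. Qed.
Lemma cc_mult h g : cc h -> cc g -> cc (fun x => h x * g x)%C.
Proof. intros H1 H2 x; destruct (H1 x), (H2 x); simpl; split.
 apply cR_minus; apply cR_mult; auto. apply cR_plus; apply cR_mult; auto. Qed.
Lemma cc_const (c : C) : cc (fun _ => c).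
Proof. intros x; split; apply cR_const. Qed.
Lemma cc_conj h : cc h -> cc (fun x => Cconj (h x)).
Proof. intros H x; destruct (H x); simpl; split; auto. apply cR_opp; auto. Qed.
Lemma cc_opp h : cc h -> cc (fun x => - h x)%C.
Proof. intros H x; destruct (H x); simpl; split; apply cR_opp; auto. Qed.
Lemma cc_minus h g : cc h -> cc g -> cc (fun x => h x - g x)%C.
Proof. intros. apply cc_plus; auto. apply cc_opp; auto. Qed.
Lemma cc_E (f : R -> R) : (forall x, continuous f x) -> cc (fun x => E (f x)).
Proof. intros H x; simpl; split. apply cR_cos; auto. apply cR_sin; auto. Qed.
Lemma cc_RtoC (f : R -> R) : (forall x, continuous f x) -> cc (fun x => RtoC (f x)).
Proof. intros H x; simpl; split; auto. apply cR_const. Qed.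

Definition RI (f : R -> R) : R := RInt f (- PI) PI.

Lemma exRI (f : R -> R) : (forall x, continuous f x) -> ex_RInt f (-PI) PI.
Proof. intros H; apply (ex_RInt_continuous (V:=R_CompleteNormedModule)); intros; apply H. Qed.

Lemma RI_lin a b (f g : R -> R) : (forall x, continuous f x) -> (forall x, continuous g x) ->
  RI (fun x => a * f x + b * g x) = a * RI f + b * RI g.
Proof.
  intros Hf Hg. unfold RI.
  rewrite (RInt_plus (fun x => a * f x) (fun x => b * g x)).
  - rewrite (RInt_scal f), (RInt_scal g). reflexivity. apply exRI; auto. apply exRI; auto.
  - apply (ex_RInt_scal f). apply exRI; auto.
  - apply (ex_RInt_scal g). apply exRI; auto.
Qed.

Lemma RI_plus (f g : R -> R) : (forall x, continuous f x) -> (forall x, continuous g x) ->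
  RI (fun x => f x + g x) = RI f + RI g.
Proof. intros. rewrite <- (Rmult_1_l (RI f)), <- (Rmult_1_l (RI g)), <- RI_lin; auto.
  f_equal. apply functional_extensionality; intros; ring. Qed.
Lemma RI_scal a (f : R -> R) : (forall x, continuous f x) -> RI (fun x => a * f x) = a * RI f.
Proof. intros. replace (a * RI f) with (a * RI f + 0 * RI f) by ring. rewrite <- RI_lin; auto.
  f_equal. apply functional_extensionality; intros; ring. Qed.
Lemma RI_const c : RI (fun _ => c) = 2 * PI * c.
Proof. unfold RI. rewrite RInt_const. simpl. unfold scal; simpl; unfold mult; simpl. ring. Qed.
Lemma RI_le (f g : R -> R) : (forall x, continuous f x) -> (forall x, continuous g x) ->
  (forall x, f x <= g x) -> RI f <= RI g.
Proof. intros. unfold RI. apply RInt_le; try apply exRI; auto. generalize PI_RGT_0; lra. Qed.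

Definition CI (h : R -> C) : C := (RI (fun x => fst (h x)), RI (fun x => snd (h x))).

Lemma CI_plus h g : cc h -> cc g -> CI (fun x => h x + g x)%C = (CI h + CI g)%C.
Proof. intros H1 H2. unfold CI; simpl. ceq; apply RI_plus; intros x; apply H1 || apply H2. Qed.

Lemma CI_scal c h : cc h -> CI (fun x => c * h x)%C = (c * CI h)%C.
Proof. intros H. unfold CI; simpl. destruct c as [c1 c2]; simpl. ceq.
  - replace (c1 * RI (fun x => fst (h x)) - c2 * RI (fun x => snd (h x))) with
      (c1 * RI (fun x => fst (h x)) + (- c2) * RI (fun x => snd (h x))) by ring.
    rewrite <- RI_lin. f_equal; apply functional_extensionality; intros; ring.
    intros x; apply H. intros x; apply H.
  - replace (c1 * RI (fun x => snd (h x)) + c2 * RI (fun x => fst (h x))) with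
      (c1 * RI (fun x => snd (h x)) + c2 * RI (fun x => fst (h x))) by ring.
    rewrite <- RI_lin. f_equal; apply functional_extensionality; intros; ring.
    intros x; apply H. intros x; apply H.
Qed.

Lemma CI_zero : CI (fun _ => 0%C) = 0%C.
Proof. unfold CI; simpl. rewrite RI_const. ceq; ring. Qed.

Fixpoint zsC (M : nat) (F : Z -> C) : C :=
  match M with O => F 0%Z | S M' => (zsC M' F + F (Z.of_nat M) + F (- Z.of_nat M)%Z)%C end.
Fixpoint zsR (M : nat) (F : Z -> R) : R :=
  match M with O => F 0%Z | S M' => zsR M' F + F (Z.of_nat M) + F (- Z.of_nat M)%Z end.

Lemma zsC_plus M F G : zsC M (fun m => F m + G m)%C = (zsC M F + zsC M G)%C.
Proof. induction M; simpl; auto. rewrite IHM; ring. Qed.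
Lemma zsC_scal M c F : zsC M (fun m => c * F m)%C = (c * zsC M F)%C.
Proof. induction M; simpl; auto. rewrite IHM; ring. Qed.
Lemma zsC_zero M : zsC M (fun _ => 0%C) = 0%C.
Proof. induction M; simpl; auto. rewrite IHM; ring. Qed.
Lemma zsR_plus M F G : zsR M (fun m => F m + G m) = zsR M F + zsR M G.
Proof. induction M; simpl; auto. rewrite IHM; ring. Qed.
Lemma zsR_scal M c F : zsR M (fun m => c * F m) = c * zsR M F.
Proof. induction M; simpl; auto. rewrite IHM; ring. Qed.
Lemma zsR_zero M : zsR M (fun _ => 0) = 0.
Proof. induction M; simpl; auto. rewrite IHM; ring. Qed.
Lemma zsR_le M F G : (forall m, F m <= G m) -> zsR M F <= zsR M G.
Proof. intros H; induction M; cbn [zsR]; auto.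
  pose proof (H (Z.of_nat (S M))); pose proof (H (- Z.of_nat (S M))%Z). lra. Qed.
Lemma zsR_nonneg M F : (forall m, 0 <= F m) -> 0 <= zsR M F.
Proof. intros H. rewrite <- (zsR_zero M). apply zsR_le; auto. Qed.
Lemma fst_zsC M F : fst (zsC M F) = zsR M (fun m => fst (F m)).
Proof. induction M; simpl; auto. rewrite IHM; ring. Qed.
Lemma Cconj_zsC M F : Cconj (zsC M F) = zsC M (fun m => Cconj (F m)).
Proof. induction M; simpl; auto. rewrite <- IHM. ceq. Qed.
Lemma cc_zsC M (F : Z -> R -> C) : (forall m, cc (F m)) -> cc (fun x => zsC M (fun m => F m x)).
Proof. intros H; induction M; cbn [zsC]; auto.
  apply cc_plus; [apply cc_plus|]; auto. Qed.
Lemma CI_zsC M (F : Z -> R -> C) : (forall m, cc (F m)) ->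
  CI (fun x => zsC M (fun m => F m x)) = zsC M (fun m => CI (F m)).
Proof. intros H; induction M; cbn [zsC]; auto.
  rewrite CI_plus, CI_plus, IHM; auto. apply cc_zsC; auto.
  apply cc_plus; auto. apply cc_zsC; auto. Qed.

Lemma zsC_delta_out M n a : (Z.of_nat M < Z.abs n)%Z ->
  zsC M (fun m => if Z.eq_dec m n then a else 0%C) = 0%C.
Proof. induction M as [|M IHM]; intros H; cbn [zsC].
  - destruct (Z.eq_dec 0 n); auto. subst; simpl in H; lia.
  - rewrite IHM by lia. destruct (Z.eq_dec (Z.of_nat (S M)) n); [lia|].
    destruct (Z.eq_dec (- Z.of_nat (S M)) n); [lia|]. ceq.
Qed.
Lemma zsC_delta M n a : (Z.abs n <= Z.of_nat M)%Z ->
  zsC M (fun m => if Z.eq_dec m n then a else 0%C) = a.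
Proof. induction M as [|M IHM]; intros H; cbn [zsC].
  - destruct (Z.eq_dec 0 n); auto. lia.
  - destruct (Z.eq_dec (Z.abs n) (Z.of_nat (S M))) as [He|He].
    + rewrite zsC_delta_out by lia.
      destruct (Z.eq_dec (Z.of_nat (S M)) n);
      destruct (Z.eq_dec (- Z.of_nat (S M)) n); try lia; ceq.
    + rewrite IHM by lia. destruct (Z.eq_dec (Z.of_nat (S M)) n); [lia|].
      destruct (Z.eq_dec (- Z.of_nat (S M)) n); [lia|]. ceq.
Qed.

Lemma cos_perZ x k : cos (x + 2 * IZR k * PI) = cos x.
Proof.
  destruct k as [|p|p].
  - simpl. f_equal; ring.
  - replace (IZR (Z.pos p)) with (INR (Pos.to_nat p)) by (rewrite INR_IZR_INZ, positive_nat_Z; auto). apply cos_period.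
  - replace x with ((x + 2 * IZR (Z.neg p) * PI) + 2 * INR (Pos.to_nat p) * PI) at 2.
    + rewrite cos_period; auto.
    + rewrite INR_IZR_INZ, positive_nat_Z. rewrite <- Pos2Z.opp_pos, opp_IZR. ring.
Qed.
Lemma sin_perZ x k : sin (x + 2 * IZR k * PI) = sin x.
Proof.
  destruct k as [|p|p].
  - simpl. f_equal; ring.
  - replace (IZR (Z.pos p)) with (INR (Pos.to_nat p)) by (rewrite INR_IZR_INZ, positive_nat_Z; auto). apply sin_period.
  - replace x with ((x + 2 * IZR (Z.neg p) * PI) + 2 * INR (Pos.to_nat p) * PI) at 2.
    + rewrite sin_period; auto.
    + rewrite INR_IZR_INZ, positive_nat_Z. rewrite <- Pos2Z.opp_pos, opp_IZR. ring.
Qed.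
Lemma cos_shiftZ x k : cos (x + IZR k * PI) = cos (x - IZR k * PI).
Proof. rewrite <- (cos_perZ (x - IZR k * PI) k). f_equal; ring. Qed.
Lemma sin_shiftZ x k : sin (x + IZR k * PI) = sin (x - IZR k * PI).
Proof. rewrite <- (sin_perZ (x - IZR k * PI) k). f_equal; ring. Qed.
Lemma sin_kPI k : sin (IZR k * PI) = 0.
Proof. pose proof (sin_shiftZ 0 k). rewrite Rplus_0_l in H.
  replace (0 - IZR k * PI) with (- (IZR k * PI)) in H by ring. rewrite sin_neg in H. lra. Qed.

Lemma RI_deriv (F f : R -> R) : (forall x, is_derive F x (f x)) -> (forall x, continuous f x) ->
  RI f = F PI - F (- PI).
Proof. intros H1 H2. unfold RI. apply is_RInt_unique.
  apply (is_RInt_derive (V:=R_CompleteNormedModule)); intros; auto. Qed.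

Lemma int_cos k : RI (fun x => cos (IZR k * x)) = if Z.eq_dec k 0 then 2 * PI else 0.
Proof.
  destruct (Z.eq_dec k 0) as [->|Hk].
  - rewrite <- (Rmult_1_r (2*PI)), <- RI_const. f_equal. apply functional_extensionality; intros.
    replace (IZR 0 * x) with 0 by ring; apply cos_0.
  - assert (IZR k <> 0) by (apply not_0_IZR; auto).
    rewrite (RI_deriv (fun x => sin (IZR k * x) / IZR k)).
    + replace (IZR k * - PI) with (- (IZR k * PI)) by ring. rewrite sin_neg, sin_kPI.
      field; auto.
    + intros x. auto_derive; auto. field; auto.
    + intros x. apply cR_cos. apply cR_mult. apply cR_const. apply cR_id.
Qed.
Lemma int_sin k : RI (fun x => sin (IZR k * x)) = 0.
Proof.
  destruct (Z.eq_dec k 0) as [->|Hk].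
  - transitivity (RI (fun _ => 0)); [|rewrite RI_const; ring]. f_equal. apply functional_extensionality; intros.
    replace (IZR 0 * x) with 0 by ring; apply sin_0.
  - assert (IZR k <> 0) by (apply not_0_IZR; auto).
    rewrite (RI_deriv (fun x => - cos (IZR k * x) / IZR k)).
    + replace (IZR k * - PI) with (- (IZR k * PI)) by ring. rewrite cos_neg.
      field; auto.
    + intros x. auto_derive; auto. field; auto.
    + intros x. apply cR_sin. apply cR_mult. apply cR_const. apply cR_id.
Qed.

Lemma E_plus a b : E (a + b) = (E a * E b)%C.
Proof. unfold E. ceq. apply cos_plus. rewrite sin_plus; ring. Qed.

Lemma cc_Elin a b : cc (fun x => E (a * x + b)).
Proof. apply cc_E. intros x. apply cR_plus. apply cR_mult. apply cR_const. apply cR_id. apply cR_const. Qed.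
Lemma cc_Em a : cc (fun x => E (a * x)).
Proof. apply cc_E. intros x. apply cR_mult. apply cR_const. apply cR_id. Qed.

Definition cf (m : Z) (h : R -> C) : C := (RtoC (/ (2 * PI)) * CI (fun x => h x * E (IZR m * x)))%C.

Lemma cf_plus m h g : cc h -> cc g -> cf m (fun x => h x + g x)%C = (cf m h + cf m g)%C.
Proof. intros. unfold cf.
  replace (fun x => (h x + g x) * E (IZR m * x)%R)%C with
    (fun x => h x * E (IZR m * x) + g x * E (IZR m * x)%R)%C
    by (apply functional_extensionality; intros; ring).
  rewrite CI_plus. ring. apply cc_mult; auto. apply cc_Em. apply cc_mult; auto. apply cc_Em. Qed.
Lemma cf_scal m c h : cc h -> cf m (fun x => c * h x)%C = (c * cf m h)%C.
Proof. intros. unfold cf.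
  replace (fun x => (c * h x) * E (IZR m * x)%R)%C with
    (fun x => c * (h x * E (IZR m * x)))%C
    by (apply functional_extensionality; intros; ring).
  rewrite CI_scal. ring. apply cc_mult; auto. apply cc_Em. Qed.
Lemma cf_zero m : cf m (fun _ => 0%C) = 0%C.
Proof. unfold cf. replace (fun x => 0 * E (IZR m * x)%R)%C with (fun _ : R => RtoC 0)
  by (apply functional_extensionality; intros; ring). rewrite CI_zero. ring. Qed.
Lemma cf_zsC m M (F : Z -> R -> C) : (forall n, cc (F n)) ->
  cf m (fun x => zsC M (fun n => F n x)) = zsC M (fun n => cf m (F n)).
Proof. intros H. induction M; cbn [zsC]; auto.
  rewrite cf_plus, cf_plus, IHM; auto. apply cc_zsC; auto.
  apply cc_plus; auto. apply cc_zsC; auto. Qed.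

Lemma cf_E m n : cf m (fun x => E (- IZR n * x)) = if Z.eq_dec m n then 1%C else 0%C.
Proof.
  unfold cf. replace (fun x => E (- IZR n * x) * E (IZR m * x)%R)%C with
    (fun x => E (IZR (m - n) * x)).
  2:{ apply functional_extensionality; intros. rewrite <- E_plus. f_equal.
      rewrite minus_IZR. ring. }
  unfold CI, E; simpl. rewrite int_cos, int_sin.
  destruct (Z.eq_dec (m - n) 0); destruct (Z.eq_dec m n); try lia.
  - ceq. field. apply PI_neq0. 
  - ceq.
Qed.

Inductive span (M : nat) : (R -> C) -> Prop :=
 | sp0 : span M (fun _ => 0%C)
 | spE : forall m, (Z.abs m <= Z.of_nat M)%Z -> span M (fun x => E (- IZR m * x))
 | spP : forall F G, span M F -> span M G -> span M (fun x => F x + G x)%C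
 | spS : forall c F, span M F -> span M (fun x => c * F x)%C
 | spX : forall F G, span M F -> (forall x, F x = G x) -> span M G.

Lemma span_cc M F : span M F -> cc F.
Proof. induction 1.
  - apply cc_const.
  - apply cc_Em.
  - apply cc_plus; auto.
  - apply cc_mult; auto. apply cc_const.
  - replace G with F; auto. apply functional_extensionality; auto.
Qed.

Lemma span_expand M F : span M F -> forall x, F x = zsC M (fun m => cf m F * E (- IZR m * x))%C.
Proof. induction 1; intros x.
  - rewrite <- (zsC_zero M) at 1. f_equal. apply functional_extensionality; intros; rewrite cf_zero; ring.
  - rewrite <- (zsC_delta M m (E (- IZR m * x))) by auto. f_equal.
    apply functional_extensionality; intros k. rewrite cf_E.
    destruct (Z.eq_dec k m); [subst; ring | ring].
  - rewrite IHspan1, IHspan2, <- zsC_plus. f_equal.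
    apply functional_extensionality; intros k. rewrite cf_plus by (eapply span_cc; eauto). ring.
  - rewrite IHspan, <- zsC_scal. f_equal.
    apply functional_extensionality; intros k. rewrite cf_scal by (eapply span_cc; eauto). ring.
  - replace G with F by (apply functional_extensionality; auto). auto.
Qed.

Lemma span_mono M N F : (M <= N)%nat -> span M F -> span N F.
Proof. intros HMN. induction 1.
  - apply sp0.
  - apply spE. lia.
  - apply spP; auto.
  - apply spS; auto.
  - eapply spX; eauto.
Qed.

Lemma span_zsC M (F : Z -> R -> C) : (forall m, (Z.abs m <= Z.of_nat M)%Z -> span M (F m)) ->
  forall M', (M' <= M)%nat -> span M (fun x => zsC M' (fun m => F m x)).
Proof. intros H M'. induction M'; intros HM; cbn [zsC].
  - apply H. simpl; lia.
  - apply spP. apply spP. apply IHM'; lia. apply H; lia. apply H; lia.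
Qed.

Definition n2 (z : C) : R := fst z ^ 2 + snd z ^ 2.
Definition nrm (h : R -> C) : R := RI (fun x => n2 (h x)).

Lemma zsR_ext_in M F G : (forall m, (Z.abs m <= Z.of_nat M)%Z -> F m = G m) -> zsR M F = zsR M G.
Proof. intros H; induction M; cbn [zsR]. apply H; simpl; lia.
  rewrite IHM by (intros; apply H; lia). rewrite (H (Z.of_nat (S M))), (H (- Z.of_nat (S M))%Z); auto; lia. Qed.

Lemma CI_cf m h : CI (fun x => h x * E (IZR m * x))%C = (RtoC (2 * PI) * cf m h)%C.
Proof. unfold cf. rewrite Cmult_assoc, <- RtoC_mult. rewrite Rinv_r. ring.
  apply Rmult_integral_contrapositive; split; [lra | apply PI_neq0]. Qed.

Lemma E_conj a : Cconj (E (- a)) = E a.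
Proof. unfold E; simpl. ceq. apply cos_neg. rewrite sin_neg; ring. Qed.

Lemma ip M h R : cc h -> span M R ->
  RI (fun x => fst (h x * Cconj (R x))%C) = 2 * PI * zsR M (fun m => fst (Cconj (cf m R) * cf m h)%C).
Proof.
  intros Hh HR.
  change (RI (fun x => fst (h x * Cconj (R x))%C)) with (fst (CI (fun x => h x * Cconj (R x))%C)).
  replace (fun x => h x * Cconj (R x))%C with
    (fun x => zsC M (fun m => Cconj (cf m R) * (h x * E (IZR m * x)%R))%C).
  2:{ apply functional_extensionality; intros x. rewrite (span_expand M R HR x).
      rewrite Cconj_zsC, <- zsC_scal. f_equal. apply functional_extensionality; intros m.
      rewrite Cmult_conj. replace (- IZR m * x) with (- (IZR m * x)) by ring.
      rewrite E_conj. ring. }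
  rewrite CI_zsC.
  2:{ intros m. apply cc_mult. apply cc_const. apply cc_mult; auto. apply cc_Em. }
  rewrite fst_zsC, <- zsR_scal. f_equal. apply functional_extensionality; intros m.
  rewrite CI_scal. 2:{ apply cc_mult; auto. apply cc_Em. }
  rewrite CI_cf. destruct (cf m R), (cf m h). simpl. ring.
Qed.

Lemma cfst (h : R -> C) x : cc h -> continuous (fun y => fst (h y)) x.
Proof. intros H; apply H. Qed.

Lemma cont_n2 h x : cc h -> continuous (fun y => n2 (h y)) x.
Proof. intros H. unfold n2. destruct (H x). apply cR_plus; apply cR_pow; auto. Qed.

Lemma key M h R : cc h -> span M R ->
  nrm (fun x => h x - R x)%C = nrm h - 2 * PI * zsR M (fun m => n2 (cf m h))
     + 2 * PI * zsR M (fun m => n2 (cf m h - cf m R)%C).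
Proof.
  intros Hh HR. pose proof (span_cc _ _ HR) as HRc.
  unfold nrm.
  replace (fun x => n2 (h x - R x)%C) with
    (fun x => (n2 (h x) + (-2) * fst (h x * Cconj (R x))%C) + 1 * fst (R x * Cconj (R x))%C).
  2:{ apply functional_extensionality; intros x. unfold n2. destruct (h x), (R x); simpl. ring. }
  assert (C1 : forall x, continuous (fun y => fst (h y * Cconj (R y))%C) x).
  { intros x. apply cfst. apply cc_mult; auto. apply cc_conj; auto. }
  assert (C2 : forall x, continuous (fun y => fst (R y * Cconj (R y))%C) x).
  { intros x. apply cfst. apply cc_mult; auto. apply cc_conj; auto. }
  rewrite RI_plus, RI_plus, RI_scal, RI_scal; auto.
  2:{ intros; apply cont_n2; auto. }
  2:{ intros; apply cR_mult; auto; apply cR_const. }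
  2:{ intros; apply cR_plus. apply cont_n2; auto. apply cR_mult; auto; apply cR_const. }
  2:{ intros; apply cR_mult; auto; apply cR_const. }
  rewrite (ip M h R), (ip M R R); auto.
  replace (zsR M (fun m => n2 (cf m h - cf m R)%C)) with
    (zsR M (fun m => n2 (cf m h) + (-2) * fst (Cconj (cf m R) * cf m h)%C + 1 * fst (Cconj (cf m R) * cf m R)%C)).
  2:{ f_equal. apply functional_extensionality; intros m. unfold n2.
      destruct (cf m h), (cf m R); simpl; ring. }
  rewrite zsR_plus, zsR_plus, zsR_scal, zsR_scal. ring.
Qed.

Lemma nrm_ge0 h : cc h -> 0 <= nrm h.
Proof. intros H. unfold nrm. rewrite <- (Rmult_0_r (2*PI)), <- RI_const.
  apply RI_le. intros; apply cR_const. intros; apply cont_n2; auto.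
  intros x; unfold n2. nra. Qed.

Lemma approx M h R : cc h -> span M R ->
  nrm h - 2 * PI * zsR M (fun m => n2 (cf m h)) <= nrm (fun x => h x - R x)%C.
Proof. intros. rewrite (key M h R); auto.
  assert (0 <= zsR M (fun m => n2 (cf m h - cf m R)%C)).
  { apply zsR_nonneg. intros; unfold n2; nra. }
  pose proof PI_RGT_0. nra. Qed.

Lemma bessel M h : cc h -> 2 * PI * zsR M (fun m => n2 (cf m h)) <= nrm h.
Proof.
  intros Hh.
  set (P := fun x => zsC M (fun m => cf m h * E (- IZR m * x))%C).
  assert (HP : span M P).
  { unfold P. apply (span_zsC M (fun m x => cf m h * E (- IZR m * x))%C); auto.
    intros m Hm. apply spS. apply spE; auto. }
  pose proof (key M h P Hh HP) as K.
  rewrite (zsR_ext_in M (fun m => n2 (cf m h - cf m P)%C) (fun _ => 0)) in K.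
  - rewrite zsR_zero in K. pose proof (nrm_ge0 (fun x => h x - P x)%C).
    assert (cc (fun x => h x - P x)%C). apply cc_minus; auto. eapply span_cc; eauto.
    specialize (H H0). lra.
  - intros m Hm. unfold P. rewrite cf_zsC.
    2:{ intros n. apply cc_mult. apply cc_const. apply cc_Em. }
    replace (fun n => cf m (fun x => cf n h * E (- IZR n * x))%C) with
      (fun n => if Z.eq_dec n m then cf m h else 0%C).
    + rewrite zsC_delta; auto. unfold n2; simpl. ring.
    + apply functional_extensionality; intros n. rewrite cf_scal by apply cc_Em.
      rewrite cf_E. destruct (Z.eq_dec n m), (Z.eq_dec m n); subst; try lia; ring.
Qed.

Definition cder (u du : R -> C) (x : R) : Prop :=
  is_derive (fun y => fst (u y)) x (fst (du x)) /\ is_derive (fun y => snd (u y)) x (snd (du x)).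

Lemma cder_plus u du v dv x : cder u du x -> cder v dv x -> cder (fun y => u y + v y)%C (fun y => du y + dv y)%C x.
Proof. intros [H1 H2] [H3 H4]. split; simpl.
  apply (is_derive_plus (fun y => fst (u y)) (fun y => fst (v y))); auto.
  apply (is_derive_plus (fun y => snd (u y)) (fun y => snd (v y))); auto. Qed.
Lemma cder_minus u du v dv x : cder u du x -> cder v dv x -> cder (fun y => u y - v y)%C (fun y => du y - dv y)%C x.
Proof. intros [H1 H2] [H3 H4]. split; simpl.
  apply (is_derive_minus (fun y => fst (u y)) (fun y => fst (v y))); auto.
  apply (is_derive_minus (fun y => snd (u y)) (fun y => snd (v y))); auto. Qed.
Lemma cder_ext u du dv x : cder u du x -> du x = dv x -> cder u dv x.
Proof. intros [H1 H2] He. unfold cder. rewrite <- He. split; auto. Qed.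
Lemma cder_const (c : C) x : cder (fun _ => c) (fun _ => RtoC 0) x.
Proof. split; simpl; apply (is_derive_const (K:=R_AbsRing) (V:=R_NormedModule)). Qed.
Lemma cder_scalfun (p dp : R -> R) (c : C) x : is_derive p x (dp x) ->
  cder (fun y => RtoC (p y) * c)%C (fun y => RtoC (dp y) * c)%C x.
Proof. intros H. destruct c as [c1 c2]. split; simpl.
  - apply (is_derive_ext (fun y => c1 * p y)). intros; req.
    replace (dp x * c1 - 0 * c2) with (c1 * dp x) by ring. apply (is_derive_scal p); auto.
  - apply (is_derive_ext (fun y => c2 * p y)). intros; req.
    replace (dp x * c2 + 0 * c1) with (c2 * dp x) by ring. apply (is_derive_scal p); auto.
Qed.
Lemma cder_E x : cder E (fun y => Ci * E y)%C x.
Proof. split; simpl.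
  - replace (0 * cos x - 1 * sin x) with (- sin x) by ring. apply is_derive_cos.
  - replace (0 * sin x + 1 * cos x) with (cos x) by ring. apply is_derive_sin.
Qed.
Lemma cder_opp u du x : cder u du (- x) -> cder (fun y => u (- y)) (fun y => - du (- y)%R)%C x.
Proof. intros [H1 H2]. split; simpl.
  - replace (- fst (du (- x))) with (-1 * fst (du (-x))) by ring.
    apply (is_derive_comp (fun y => fst (u y)) Ropp); auto.
    auto_derive; auto; try ring.
  - replace (- snd (du (- x))) with (-1 * snd (du (-x))) by ring.
    apply (is_derive_comp (fun y => snd (u y)) Ropp); auto.
    auto_derive; auto; try ring.
Qed.

Lemma cder_fst (w : C) u du x : cder u du x -> is_derive (fun y => fst (w * u y)%C) x (fst (w * du x)%C).
Proof. intros [H1 H2]. destruct w as [w1 w2]; simpl.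
  apply (is_derive_minus (fun y => w1 * fst (u y)) (fun y => w2 * snd (u y))).
  apply (is_derive_scal (fun y => fst (u y))); auto.
  apply (is_derive_scal (fun y => snd (u y))); auto. Qed.

Lemma growth (u du : R -> C) (B dB : R -> R) X : 0 <= X -> u 0 = RtoC 0 -> B 0 = 0 ->
  (forall s, cder u du s) -> (forall s, is_derive B s (dB s)) ->
  (forall s, 0 <= s <= X -> Cmod (du s) <= dB s) -> Cmod (u X) <= B X.
Proof.
  intros HX Hu0 HB0 Hu HB Hb.
  assert (HBX : 0 <= B X).
  { destruct (MVT_gen B 0 X dB) as [c [Hc Hm]].
    - intros; apply HB.
    - intros; apply continuity_pt_filterlim. apply (ex_derive_continuous B). eexists; apply HB.
    - rewrite Rmin_left in Hc by lra. rewrite Rmax_right in Hc by lra.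
      pose proof (Hb c Hc). pose proof (Cmod_ge_0 (du c)). nra. }
  destruct (Req_dec (Cmod (u X)) 0) as [Hz|Hz]. lra.
  set (w := (RtoC (/ Cmod (u X)) * Cconj (u X))%C).
  assert (Hw1 : fst (w * u X)%C = Cmod (u X)).
  { unfold w. assert (Hq : fst ((RtoC (/ Cmod (u X)) * Cconj (u X)) * u X)%C
       = / Cmod (u X) * (Re (u X) ^ 2 + Im (u X) ^ 2)).
    { unfold Re, Im. destruct (u X); simpl; ring. }
    rewrite Hq, <- Cmod2_alt. field; auto. }
  assert (Hw2 : Cmod w = 1).
  { unfold w. rewrite Cmod_mult, Cmod_conj, Cmod_R. rewrite Rabs_right.
    field; auto. apply Rle_ge, Rlt_le, Rinv_0_lt_compat. pose proof (Cmod_ge_0 (u X)); lra. }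
  set (g := fun s => fst (w * u s)%C - B s).
  destruct (MVT_gen g 0 X (fun s => fst (w * du s)%C - dB s)) as [c [Hc Hm]].
  - intros. unfold g. apply (is_derive_minus (fun s => fst (w * u s)%C) B). apply cder_fst; auto. apply HB.
  - intros; apply continuity_pt_filterlim. apply (ex_derive_continuous g). eexists.
    unfold g. apply (is_derive_minus (fun s => fst (w * u s)%C) B). apply cder_fst; apply Hu. apply HB.
  - rewrite Rmin_left in Hc by lra. rewrite Rmax_right in Hc by lra.
    unfold g in Hm. rewrite Hu0, HB0 in Hm.
    assert (fst (w * du c)%C <= dB c).
    { pose proof (re_le_Cmod (w * du c)%C). rewrite Cmod_mult, Hw2 in H.
      pose proof (Hb c Hc). unfold Re in H. apply Rabs_le_between in H. lra. }
    rewrite Hw1 in Hm. replace (fst (w * RtoC 0)%C) with 0 in Hm by (destruct w; simpl; ring).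
    assert ((fst (w * du c)%C - dB c) * (X - 0) <= 0). apply Rmult_le_0_r; lra. lra.
Qed.

Fixpoint TP (K : nat) (x : R) : C :=
  match K with O => RtoC 1 | S K' => (TP K' x + RtoC (x ^ K / INR (fact K)) * Ci ^ K)%C end.

Lemma pder n y : is_derive (fun y => y ^ (S n) / INR (fact (S n))) y (y ^ n / INR (fact n)).
Proof. rewrite fact_simpl, mult_INR.
  pose proof (INR_fact_neq_0 n). pose proof (pos_INR n).
  apply (is_derive_ext (fun y => / (INR (S n) * INR (fact n)) * y ^ S n)). intros; unfold Rdiv; apply Rmult_comm.
  replace (y ^ n / INR (fact n)) with (/ (INR (S n) * INR (fact n)) * (INR (S n) * 1 * y ^ Nat.pred (S n))).
  apply is_derive_scal. apply is_derive_pow. exact (is_derive_id (K:=R_AbsRing) y).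
  simpl Nat.pred. rewrite S_INR. field; split; lra. Qed.

Lemma TP_der K x : cder (TP (S K)) (fun y => Ci * TP K y)%C x.
Proof.
  induction K.
  - eapply cder_ext. apply cder_plus. apply cder_const.
    apply (cder_scalfun (fun y => y ^ 1 / INR (fact 1)) (fun y => y ^ 0 / INR (fact 0))). apply (pder 0).
    simpl. apply injective_projections; simpl; field.
  - eapply cder_ext. apply cder_plus. apply IHK.
    apply (cder_scalfun (fun y => y ^ S (S K) / INR (fact (S (S K)))) (fun y => y ^ S K / INR (fact (S K)))). apply pder.
    cbv beta. change (TP (S K) x) with (TP K x + RtoC (x ^ S K / INR (fact (S K))) * Ci ^ S K)%C. change (Ci ^ S (S K))%C with (Ci * Ci ^ S K)%C. generalize (Ci ^ S K)%C; intros c. ring.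
Qed.

Definition D K x := (E x - TP K x)%C.

Lemma D0 K : D K 0 = RtoC 0.
Proof. unfold D. induction K.
  - unfold E; simpl. rewrite cos_0, sin_0. ceq.
  - change (TP (S K) 0) with (TP K 0 + RtoC (0 ^ S K / INR (fact (S K))) * Ci ^ S K)%C. replace (0 ^ S K / INR (fact (S K))) with 0 by (rewrite pow_i by lia; unfold Rdiv; ring).
    replace (E 0 - (TP K 0 + RtoC 0 * Ci ^ S K))%C with (E 0 - TP K 0)%C by ring. auto.
Qed.

Lemma D_der K x : cder (D K) (fun y => Ci * (match K with O => E y | S K' => D K' y end))%C x.
Proof. destruct K.
  - eapply cder_ext. apply cder_minus. apply cder_E. apply cder_const. simpl. ring.
  - eapply cder_ext. apply cder_minus. apply cder_E. apply TP_der. unfold D. ring.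
Qed.

Lemma CmodCi z : Cmod (Ci * z)%C = Cmod z.
Proof. rewrite Cmod_mult, Cmod_Ci; ring. Qed.

Lemma Cmod_E a : Cmod (E a) = 1.
Proof. unfold Cmod, E; cbn [fst snd]. rewrite <- sqrt_1. f_equal.
  rewrite <- (sin2_cos2 a). unfold Rsqr. ring. Qed.

Lemma taylor K x : Cmod (D K x) <= Rabs x ^ (S K) / INR (fact (S K)).
Proof.
  revert x. induction K; intros x.
  - destruct (Rle_dec 0 x).
    + rewrite Rabs_right by lra.
      apply (growth (D 0) (fun y => Ci * E y)%C (fun s => s ^ 1 / INR (fact 1)) (fun s => s ^ 0 / INR (fact 0))); auto.
      apply D0. simpl; field. intros; apply (D_der 0). intros; apply (pder 0).
      intros s Hs. rewrite CmodCi, Cmod_E. simpl; lra.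
    + rewrite Rabs_left by lra.
      replace x with (- - x) at 1 by ring.
      apply (growth (fun y => D 0 (- y)) (fun y => - (Ci * E (- y)))%C (fun s => s ^ 1 / INR (fact 1)) (fun s => s ^ 0 / INR (fact 0))).
      lra. rewrite Ropp_0; apply D0. simpl; field. intros; apply (cder_opp (D 0) (fun y => Ci * E y)%C); apply (D_der 0). intros; apply (pder 0).
      intros s Hs. rewrite Cmod_opp, CmodCi, Cmod_E. simpl; lra.
  - destruct (Rle_dec 0 x).
    + rewrite Rabs_right by lra.
      apply (growth (D (S K)) (fun y => Ci * D K y)%C (fun s => s ^ S (S K) / INR (fact (S (S K)))) (fun s => s ^ S K / INR (fact (S K)))); auto.
      apply D0. rewrite pow_i by lia; unfold Rdiv; ring. intros; apply (D_der (S K)). intros; apply pder.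
      intros s Hs. rewrite CmodCi. specialize (IHK s). rewrite Rabs_right in IHK by lra. auto.
    + rewrite Rabs_left by lra.
      replace x with (- - x) at 1 by ring.
      apply (growth (fun y => D (S K) (- y)) (fun y => - (Ci * D K (- y)))%C (fun s => s ^ S (S K) / INR (fact (S (S K)))) (fun s => s ^ S K / INR (fact (S K)))).
      lra. rewrite Ropp_0; apply D0. rewrite pow_i by lia; unfold Rdiv; ring.
      intros; apply (cder_opp (D (S K)) (fun y => Ci * D K y)%C); apply (D_der (S K)). intros; apply pder.
      intros s Hs. rewrite Cmod_opp, CmodCi. specialize (IHK (- s)).
      rewrite Rabs_Ropp, Rabs_right in IHK by lra. auto.
Qed.

Definition fF t x := E (t * (2 * cos x - 2)).
Definition fD t x := (RtoC (-2 * t * sin x) * (Ci * fF t x))%C.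
Definition gph t m x := t * (2 * cos x - 2) + IZR m * x.

Lemma cont_gph t m x : continuous (gph t m) x.
Proof. unfold gph. apply cR_plus. apply cR_mult. apply cR_const. apply cR_minus.
  apply cR_mult. apply cR_const. apply cR_cos. apply cR_id. apply cR_const.
  apply cR_mult. apply cR_const. apply cR_id. Qed.
Lemma cont_phi t x : continuous (fun x => t * (2 * cos x - 2)) x.
Proof. apply cR_mult. apply cR_const. apply cR_minus.
  apply cR_mult. apply cR_const. apply cR_cos. apply cR_id. apply cR_const. Qed.
Lemma cont_sin x : continuous sin x.
Proof. apply (cR_sin (fun y => y)). apply cR_id. Qed.

Lemma cc_fF t : cc (fF t).
Proof. apply cc_E. apply cont_phi. Qed.
Lemma cc_fD t : cc (fD t).
Proof. unfold fD. apply cc_mult. apply cc_RtoC. intros; apply cR_mult. apply cR_const. apply cont_sin.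
  apply cc_mult. apply cc_const. apply cc_fF. Qed.

Lemma fF_E t m x : (fF t x * E (IZR m * x))%C = E (gph t m x).
Proof. unfold fF, gph. rewrite E_plus. auto. Qed.

Lemma cf_fF t m : cf m (fF t) = (RtoC (/ (2 * PI)) * (RI (fun x => cos (gph t m x)), RI (fun x => sin (gph t m x))))%C.
Proof. unfold cf, CI. f_equal. f_equal; f_equal; apply functional_extensionality; intros x;
  rewrite fF_E; reflexivity. Qed.

Lemma kernel_cf t m : schr_kernel t m = cf m (fF t).
Proof. rewrite cf_fF. unfold schr_kernel, RI, gph. ceq. Qed.

Lemma n2_E a : n2 (E a) = 1.
Proof. unfold n2, E; cbn [fst snd]. pose proof (sin2_cos2 a) as H; unfold Rsqr in H.
  replace (cos a ^ 2 + sin a ^ 2) with (sin a * sin a + cos a * cos a) by ring; exact H. Qed.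

Lemma nrm_fF t : nrm (fF t) = 2 * PI.
Proof. unfold nrm. replace (fun x => n2 (fF t x)) with (fun _ : R => 1).
  rewrite RI_const; ring. apply functional_extensionality; intros; unfold fF; rewrite n2_E; auto. Qed.

Lemma RI_sin2 : RI (fun x => sin x ^ 2) = PI.
Proof. rewrite (RI_deriv (fun x => x / 2 - sin (2 * x) / 4)).
  - replace (2 * PI) with (0 + 2 * IZR 1 * PI) by (simpl; ring).
    replace (2 * - PI) with (0 + 2 * IZR (-1) * PI) by (simpl; ring).
    rewrite !sin_perZ, sin_0. field.
  - intros x. auto_derive; auto. rewrite cos_2a_sin. field.
  - intros x. apply cR_pow. apply cont_sin.
Qed.

Lemma nrm_fD t : nrm (fD t) = 4 * t ^ 2 * PI.
Proof. unfold nrm. replace (fun x => n2 (fD t x)) with (fun x => (4 * t ^ 2) * sin x ^ 2).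
  rewrite RI_scal, RI_sin2; auto. intros; apply cR_pow, cont_sin.
  apply functional_extensionality; intros x. unfold fD.
  assert (H : n2 (fF t x) = 1) by (unfold fF; apply n2_E).
  destruct (fF t x) as [a b]. unfold n2 in *; cbn [fst snd] in *.
  transitivity (4 * t ^ 2 * sin x ^ 2 * (a ^ 2 + b ^ 2)). rewrite H; ring.
  unfold Cmult, Ci, RtoC; cbn [fst snd]; ring.
Qed.

Lemma int_by_parts_sin t m :
  RI (fun x => 2 * t * sin x * sin (gph t m x)) = IZR m * RI (fun x => sin (gph t m x)).
Proof.
  assert (H0 : RI (fun x => (IZR m - 2 * t * sin x) * sin (gph t m x)) = 0).
  { rewrite (RI_deriv (fun x => - cos (gph t m x))).
    - unfold gph. rewrite cos_PI, cos_neg, cos_PI.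
      replace (t * (2 * -1 - 2) + IZR m * PI) with ((-4 * t) + IZR m * PI) by ring.
      replace (t * (2 * -1 - 2) + IZR m * - PI) with ((-4 * t) - IZR m * PI) by ring.
      rewrite cos_shiftZ. ring.
    - intros x. unfold gph. auto_derive; auto. req2.
    - intros x. apply cR_mult. apply cR_minus. apply cR_const. apply cR_mult. apply cR_const. apply cont_sin.
      apply cR_sin. apply cont_gph. }
  replace (fun x => 2 * t * sin x * sin (gph t m x)) with
    (fun x => IZR m * sin (gph t m x) + (-1) * ((IZR m - 2 * t * sin x) * sin (gph t m x))).
  rewrite RI_lin, H0. ring.
  intros; apply cR_sin, cont_gph.
  intros. apply cR_mult. apply cR_minus. apply cR_const. apply cR_mult. apply cR_const. apply cont_sin.
  apply cR_sin. apply cont_gph.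
  apply functional_extensionality; intros; ring.
Qed.

Lemma int_by_parts_cos t m :
  RI (fun x => 2 * t * sin x * cos (gph t m x)) = IZR m * RI (fun x => cos (gph t m x)).
Proof.
  assert (H0 : RI (fun x => (IZR m - 2 * t * sin x) * cos (gph t m x)) = 0).
  { rewrite (RI_deriv (fun x => sin (gph t m x))).
    - unfold gph. rewrite cos_PI, cos_neg, cos_PI.
      replace (t * (2 * -1 - 2) + IZR m * PI) with ((-4 * t) + IZR m * PI) by ring.
      replace (t * (2 * -1 - 2) + IZR m * - PI) with ((-4 * t) - IZR m * PI) by ring.
      rewrite sin_shiftZ. ring.
    - intros x. unfold gph. auto_derive; auto. req2.
    - intros x. apply cR_mult. apply cR_minus. apply cR_const. apply cR_mult. apply cR_const. apply cont_sin.
      apply cR_cos. apply cont_gph. }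
  replace (fun x => 2 * t * sin x * cos (gph t m x)) with
    (fun x => IZR m * cos (gph t m x) + (-1) * ((IZR m - 2 * t * sin x) * cos (gph t m x))).
  rewrite RI_lin, H0. ring.
  intros; apply cR_cos, cont_gph.
  intros. apply cR_mult. apply cR_minus. apply cR_const. apply cR_mult. apply cR_const. apply cont_sin.
  apply cR_cos. apply cont_gph.
  apply functional_extensionality; intros; ring.
Qed.

Lemma cf_fD t m : n2 (cf m (fD t)) = IZR m ^ 2 * n2 (cf m (fF t)).
Proof.
  rewrite cf_fF. unfold cf, CI.
  replace (fun x => fst (fD t x * E (IZR m * x))%C) with (fun x => 2 * t * sin x * sin (gph t m x)).
  2:{ apply functional_extensionality; intros x. unfold fD.
      replace ((RtoC (-2 * t * sin x) * (Ci * fF t x)) * E (IZR m * x))%C with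
        (RtoC (-2 * t * sin x) * (Ci * (fF t x * E (IZR m * x))))%C by ring.
      rewrite fF_E. unfold E. simpl. ring. }
  replace (fun x => snd (fD t x * E (IZR m * x))%C) with (fun x => (-1) * (2 * t * sin x * cos (gph t m x))).
  2:{ apply functional_extensionality; intros x. unfold fD.
      replace ((RtoC (-2 * t * sin x) * (Ci * fF t x)) * E (IZR m * x))%C with
        (RtoC (-2 * t * sin x) * (Ci * (fF t x * E (IZR m * x))))%C by ring.
      rewrite fF_E. unfold E. simpl. ring. }
  rewrite RI_scal, int_by_parts_sin, int_by_parts_cos.
  unfold n2; simpl. ring.
  intros; apply cR_mult. apply cR_mult. apply cR_const. apply cont_sin. apply cR_cos, cont_gph.
Qed.

Lemma moment t M : zsR M (fun m => IZR m ^ 2 * n2 (cf m (fF t))) <= 2 * t ^ 2.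
Proof.
  pose proof (bessel M (fD t) (cc_fD t)) as H. rewrite nrm_fD in H.
  replace (fun m => n2 (cf m (fD t))) with (fun m => IZR m ^ 2 * n2 (cf m (fF t))) in H.
  pose proof PI_RGT_0. nra.
  apply functional_extensionality; intros; rewrite cf_fD; auto.
Qed.

Lemma span_one : span 0 (fun _ => RtoC 1).
Proof. eapply spX. apply (spE 0 0%Z). simpl; lia. intros x. unfold E. simpl.
  replace (- 0 * x) with 0 by ring. rewrite cos_0, sin_0. auto. Qed.

Lemma span_cos M F : span M F -> span (S M) (fun x => RtoC (cos x) * F x)%C.
Proof. induction 1.
  - eapply spX. apply sp0. intros; cbv beta; ring.
  - eapply spX. apply spP. apply (spS _ (RtoC (/2))). apply (spE _ (m + 1)). lia.
    apply (spS _ (RtoC (/2))). apply (spE _ (m - 1)). lia.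
    intros x. rewrite plus_IZR, minus_IZR. unfold E. ceq.
    + replace (- (IZR m + 1) * x) with (- IZR m * x - x) by ring.
      replace (- (IZR m - 1) * x) with (- IZR m * x + x) by ring.
      rewrite cos_minus, cos_plus. field.
    + replace (- (IZR m + 1) * x) with (- IZR m * x - x) by ring.
      replace (- (IZR m - 1) * x) with (- IZR m * x + x) by ring.
      rewrite sin_minus, sin_plus. field.
  - eapply spX. apply (spP _ _ _ IHspan1 IHspan2). intros; cbv beta; ring.
  - eapply spX. apply (spS _ c _ IHspan). intros; cbv beta; ring.
  - eapply spX. apply IHspan. intros; cbv beta; rewrite H0; auto.
Qed.

Lemma span_cospow k : span k (fun x => RtoC (cos x ^ k)).
Proof. induction k.
  - eapply spX. apply span_one. intros; auto.
  - eapply spX. apply span_cos. apply IHk. intros x. cbv beta. rewrite <- RtoC_mult. auto.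
Qed.

Lemma span_TP t K : span K (fun x => TP K (2 * t * cos x)).
Proof. induction K.
  - eapply spX. apply span_one. intros; auto.
  - eapply spX. apply spP. apply (span_mono K). lia. apply IHK.
    apply (spS _ (Ci ^ S K * RtoC ((2 * t) ^ S K / INR (fact (S K))))%C). apply span_cospow.
    intros x. change (TP (S K) (2 * t * cos x)) with
      (TP K (2 * t * cos x) + RtoC ((2 * t * cos x) ^ S K / INR (fact (S K))) * Ci ^ S K)%C.
    cbv beta.
    assert (Hr : ((2 * t * cos x) ^ S K / INR (fact (S K))) = ((2 * t) ^ S K / INR (fact (S K))) * cos x ^ S K)
      by (rewrite !Rpow_mult_distr; field; apply INR_fact_neq_0).
    rewrite Hr, RtoC_mult. generalize (Ci ^ S K)%C; intros c. ring.
Qed.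

Definition Qa t K x := (E (-2 * t) * TP K (2 * t * cos x))%C.

Lemma span_Qa t K : span K (Qa t K).
Proof. unfold Qa. apply spS. apply span_TP. Qed.

Lemma n2_Cmod z : n2 z = Cmod z ^ 2.
Proof. rewrite Cmod2_alt. unfold n2, Re, Im; auto. Qed.

Lemma approx_f t K : 0 <= t ->
  nrm (fun x => fF t x - Qa t K x)%C <= 2 * PI * ((2 * t) ^ S K / INR (fact (S K))) ^ 2.
Proof.
  intros Ht. unfold nrm. rewrite <- RI_const. apply RI_le.
  - intros; apply cont_n2. apply cc_minus. apply cc_fF. apply span_cc with K; apply span_Qa.
  - intros; apply cR_const.
  - intros x. rewrite n2_Cmod.
    replace (fF t x - Qa t K x)%C with (E (-2 * t) * D K (2 * t * cos x))%C.
    2:{ unfold fF, Qa, D. replace (t * (2 * cos x - 2)) with (-2 * t + 2 * t * cos x) by ring.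
        rewrite E_plus. ring. }
    rewrite Cmod_mult, Cmod_E, Rmult_1_l.
    pose proof (taylor K (2 * t * cos x)).
    assert (Rabs (2 * t * cos x) ^ S K <= (2 * t) ^ S K).
    { apply pow_incr. split. apply Rabs_pos. rewrite Rabs_mult, (Rabs_right (2*t)) by lra.
      pose proof (COS_bound x). assert (Rabs (cos x) <= 1) by (apply Rabs_le; lra).
      pose proof (Rabs_pos (cos x)). nra. }
    pose proof (INR_fact_lt_0 (S K)).
    assert (Cmod (D K (2 * t * cos x)) <= (2 * t) ^ S K / INR (fact (S K))).
    { eapply Rle_trans. apply H. unfold Rdiv. apply Rmult_le_compat_r; auto.
      apply Rlt_le, Rinv_0_lt_compat; auto. }
    pose proof (Cmod_ge_0 (D K (2 * t * cos x))). nra.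
Qed.

Lemma mass t K : 0 <= t ->
  1 - ((2 * t) ^ S K / INR (fact (S K))) ^ 2 <= zsR K (fun m => n2 (cf m (fF t))).
Proof.
  intros Ht. pose proof (approx K (fF t) (Qa t K) (cc_fF t) (span_Qa t K)).
  pose proof (approx_f t K Ht). rewrite nrm_fF in H. pose proof PI_RGT_0.
  assert (2 * PI * (1 - ((2 * t) ^ S K / INR (fact (S K))) ^ 2) <= 2 * PI * zsR K (fun m => n2 (cf m (fF t)))) by nra.
  apply Rmult_le_reg_l in H2; lra.
Qed.

Definition phase (g g1 g2 : R -> R) :=
  (forall x, is_derive g x (g1 x)) /\ (forall x, is_derive g1 x (g2 x)) /\ (forall x, continuous g2 x).

Lemma der_cont (f df : R -> R) : (forall x, is_derive f x (df x)) -> forall x, continuous f x.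
Proof. intros H x. apply (ex_derive_continuous f). eexists; apply H. Qed.

Lemma phase_opp g g1 g2 : phase g g1 g2 -> phase (fun x => - g x) (fun x => - g1 x) (fun x => - g2 x).
Proof. intros [H1 [H2 H3]]. split; [|split]; intros x.
  apply (is_derive_opp g); auto. apply (is_derive_opp g1); auto. apply cR_opp; auto. Qed.
Lemma phase_shift g g1 g2 c : phase g g1 g2 -> phase (fun x => g x + c) g1 g2.
Proof. intros [H1 [H2 H3]]. split; [|split]; auto. intros x.
  replace (g1 x) with (g1 x + 0) by ring. apply (is_derive_plus g (fun _ => c)); auto.
  apply (is_derive_const (K:=R_AbsRing) (V:=R_NormedModule)). Qed.

Lemma exR (f : R -> R) a b : (forall x, Rmin a b <= x <= Rmax a b -> continuous f x) -> ex_RInt f a b.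
Proof. intros; apply (ex_RInt_continuous (V:=R_CompleteNormedModule)); auto. Qed.

Lemma int_signed (h d : R -> R) a b : a <= b ->
  (forall x, a <= x <= b -> continuous h x) -> (forall x, a <= x <= b -> continuous d x) ->
  (forall x, a <= x <= b -> Rabs (h x) <= 1) ->
  ((forall x, a <= x <= b -> 0 <= d x) \/ (forall x, a <= x <= b -> d x <= 0)) ->
  Rabs (RInt (fun x => h x * d x) a b) <= Rabs (RInt d a b).
Proof.
  intros Hab Hh Hd Hb Hs.
  assert (E1 : ex_RInt d a b). { apply exR. rewrite Rmin_left, Rmax_right by lra. auto. }
  assert (E2 : ex_RInt (fun x => h x * d x) a b).
  { apply exR. rewrite Rmin_left, Rmax_right by lra. intros; apply cR_mult; auto. }
  assert (E3 : ex_RInt (fun x => - d x) a b). { apply (ex_RInt_opp d); auto. }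
  assert (Hop : RInt (fun x => - d x) a b = - RInt d a b). { apply (RInt_opp d); auto. }
  destruct Hs as [Hs|Hs].
  - assert (RInt (fun x => h x * d x) a b <= RInt d a b).
    { apply RInt_le; auto. intros x Hx. pose proof (Hb x (conj (Rlt_le _ _ (proj1 Hx)) (Rlt_le _ _ (proj2 Hx)))).
      pose proof (Hs x (conj (Rlt_le _ _ (proj1 Hx)) (Rlt_le _ _ (proj2 Hx)))).
      apply Rabs_le_between in H. nra. }
    assert (RInt (fun x => - d x) a b <= RInt (fun x => h x * d x) a b).
    { apply RInt_le; auto. intros x Hx. pose proof (Hb x (conj (Rlt_le _ _ (proj1 Hx)) (Rlt_le _ _ (proj2 Hx)))).
      pose proof (Hs x (conj (Rlt_le _ _ (proj1 Hx)) (Rlt_le _ _ (proj2 Hx)))).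
      apply Rabs_le_between in H0. nra. }
    rewrite Hop in H0. pose proof (Rle_abs (RInt d a b)). pose proof (Rle_abs (- RInt d a b)).
    rewrite Rabs_Ropp in H2. apply Rabs_le; lra.
  - assert (RInt d a b <= RInt (fun x => h x * d x) a b).
    { apply RInt_le; auto. intros x Hx. pose proof (Hb x (conj (Rlt_le _ _ (proj1 Hx)) (Rlt_le _ _ (proj2 Hx)))).
      pose proof (Hs x (conj (Rlt_le _ _ (proj1 Hx)) (Rlt_le _ _ (proj2 Hx)))).
      apply Rabs_le_between in H. nra. }
    assert (RInt (fun x => h x * d x) a b <= RInt (fun x => - d x) a b).
    { apply RInt_le; auto. intros x Hx. pose proof (Hb x (conj (Rlt_le _ _ (proj1 Hx)) (Rlt_le _ _ (proj2 Hx)))).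
      pose proof (Hs x (conj (Rlt_le _ _ (proj1 Hx)) (Rlt_le _ _ (proj2 Hx)))).
      apply Rabs_le_between in H0. nra. }
    rewrite Hop in H0. pose proof (Rle_abs (RInt d a b)). pose proof (Rle_abs (- RInt d a b)).
    rewrite Rabs_Ropp in H2. apply Rabs_le; lra.
Qed.

Lemma FD_pos g g1 g2 a b mu : phase g g1 g2 -> a <= b -> 0 < mu ->
  (forall x, a <= x <= b -> mu <= g1 x) ->
  ((forall x, a <= x <= b -> 0 <= g2 x) \/ (forall x, a <= x <= b -> g2 x <= 0)) ->
  Rabs (RInt (fun x => cos (g x)) a b) <= 3 / mu.
Proof.
  intros [Hd1 [Hd2 Hc2]] Hab Hmu Hg1 Hs.
  assert (Hc1 := der_cont g1 g2 Hd2). assert (Hc0 := der_cont g g1 Hd1).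
  assert (Hnz : forall x, a <= x <= b -> g1 x <> 0). { intros x Hx; specialize (Hg1 x Hx); lra. }
  set (du := fun x => - g2 x / g1 x ^ 2).
  assert (Hu : forall x, a <= x <= b -> is_derive (fun y => / g1 y) x (du x)).
  { intros x Hx. apply is_derive_inv; auto. }
  assert (Hcdu : forall x, a <= x <= b -> continuous du x).
  { intros x Hx. unfold du. unfold Rdiv. apply cR_mult. apply cR_opp; auto.
    apply (continuous_comp (fun y => g1 y ^ 2) Rinv). apply cR_pow; auto.
    apply continuity_pt_filterlim. apply continuity_pt_inv. apply continuity_pt_filterlim.
    apply cR_id. apply pow_nonzero; auto. }
  assert (HF : forall x, a <= x <= b -> is_derive (fun y => sin (g y) * / g1 y) x (cos (g x) + sin (g x) * du x)).
  { intros x Hx.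
    pose proof (is_derive_comp sin g x (cos (g x)) (g1 x) (is_derive_sin (g x)) (Hd1 x)) as H1.
    pose proof (is_derive_mult (fun y => sin (g y)) (fun y => / g1 y) x _ _ H1 (Hu x Hx)
      ltac:(intros; apply Rmult_comm)) as H2.
    replace (cos (g x) + sin (g x) * du x) with
      (plus (mult (scal (g1 x) (cos (g x))) (/ g1 x)) (mult (sin (g x)) (du x))); auto.
    change (g1 x * cos (g x) * / g1 x + sin (g x) * du x = cos (g x) + sin (g x) * du x).
    field. apply Hnz; auto. }
  assert (I1 : RInt (fun x => cos (g x) + sin (g x) * du x) a b = sin (g b) * / g1 b - sin (g a) * / g1 a).
  { apply is_RInt_unique. apply (is_RInt_derive (V:=R_CompleteNormedModule) (fun y => sin (g y) * / g1 y)).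
    intros x Hx; rewrite Rmin_left, Rmax_right in Hx by lra. apply HF; auto.
    intros x Hx; rewrite Rmin_left, Rmax_right in Hx by lra. apply cR_plus. apply cR_cos; auto.
    apply cR_mult. apply cR_sin; auto. apply Hcdu; auto. }
  assert (I2 : RInt du a b = / g1 b - / g1 a).
  { apply is_RInt_unique. apply (is_RInt_derive (V:=R_CompleteNormedModule) (fun y => / g1 y)).
    intros x Hx; rewrite Rmin_left, Rmax_right in Hx by lra. apply Hu; auto.
    intros x Hx; rewrite Rmin_left, Rmax_right in Hx by lra. apply Hcdu; auto. }
  rewrite (RInt_plus (V:=R_CompleteNormedModule) (fun x => cos (g x)) (fun x => sin (g x) * du x)) in I1.
  2:{ apply exR. rewrite Rmin_left, Rmax_right by lra. intros; apply cR_cos; auto. }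
  2:{ apply exR. rewrite Rmin_left, Rmax_right by lra. intros; apply cR_mult. apply cR_sin; auto. apply Hcdu; auto. }
  change (plus ?x ?y) with (x + y) in I1.
  assert (Hs2 : Rabs (RInt (fun x => sin (g x) * du x) a b) <= Rabs (RInt du a b)).
  { apply (int_signed (fun x => sin (g x)) du); auto.
    intros; apply cR_sin; auto. intros; apply Rabs_le; apply SIN_bound.
    destruct Hs as [Hs|Hs]; [right|left]; intros x Hx; unfold du; specialize (Hs x Hx);
    pose proof (pow_lt (g1 x) 2 (Rlt_le_trans _ _ _ Hmu (Hg1 x Hx))); unfold Rdiv;
    [apply Rmult_le_0_r|apply Rmult_le_pos]; try lra; left; apply Rinv_0_lt_compat; lra. }
  rewrite I2 in Hs2.
  assert (Ha : 0 < / g1 a <= / mu). { pose proof (Hg1 a (conj (Rle_refl a) Hab)). split.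
    apply Rinv_0_lt_compat; lra. apply Rinv_le_contravar; lra. }
  assert (Hb : 0 < / g1 b <= / mu). { pose proof (Hg1 b (conj Hab (Rle_refl b))). split.
    apply Rinv_0_lt_compat; lra. apply Rinv_le_contravar; lra. }
  assert (Rabs (sin (g b) * / g1 b) <= / mu).
  { rewrite Rabs_mult, (Rabs_right (/ g1 b)) by lra. pose proof (SIN_bound (g b)).
    assert (Rabs (sin (g b)) <= 1) by (apply Rabs_le; lra). pose proof (Rabs_pos (sin (g b))). nra. }
  assert (Rabs (sin (g a) * / g1 a) <= / mu).
  { rewrite Rabs_mult, (Rabs_right (/ g1 a)) by lra. pose proof (SIN_bound (g a)).
    assert (Rabs (sin (g a)) <= 1) by (apply Rabs_le; lra). pose proof (Rabs_pos (sin (g a))). nra. }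
  assert (Rabs (/ g1 b - / g1 a) <= / mu) by (apply Rabs_le; lra).
  replace (RInt (fun x => cos (g x)) a b) with
    ((sin (g b) * / g1 b - sin (g a) * / g1 a) - RInt (fun x => sin (g x) * du x) a b) by lra.
  unfold Rminus. eapply Rle_trans. apply Rabs_triang. rewrite Rabs_Ropp.
  eapply Rle_trans. apply Rplus_le_compat_r. apply Rabs_triang. rewrite Rabs_Ropp.
  unfold Rdiv. lra.
Qed.

Lemma FDc g g1 g2 a b mu : phase g g1 g2 -> a <= b -> 0 < mu ->
  ((forall x, a <= x <= b -> mu <= g1 x) \/ (forall x, a <= x <= b -> g1 x <= - mu)) ->
  ((forall x, a <= x <= b -> 0 <= g2 x) \/ (forall x, a <= x <= b -> g2 x <= 0)) ->
  Rabs (RInt (fun x => cos (g x)) a b) <= 3 / mu.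
Proof.
  intros Hp Hab Hmu [Hg|Hg] Hs.
  - eapply FD_pos; eauto.
  - replace (RInt (fun x => cos (g x)) a b) with (RInt (fun x => cos (- g x)) a b).
    apply (FD_pos (fun x => - g x) (fun x => - g1 x) (fun x => - g2 x)); auto. apply phase_opp; auto.
    intros x Hx; specialize (Hg x Hx); lra.
    destruct Hs as [Hs|Hs]; [right|left]; intros x Hx; specialize (Hs x Hx); lra.
    apply RInt_ext; intros; rewrite cos_neg; auto.
Qed.

Lemma sin_as_cos y : sin y = cos (y + - (PI / 2)).
Proof. rewrite <- cos_shift. rewrite <- cos_neg. f_equal; ring. Qed.

Lemma FDs g g1 g2 a b mu : phase g g1 g2 -> a <= b -> 0 < mu ->
  ((forall x, a <= x <= b -> mu <= g1 x) \/ (forall x, a <= x <= b -> g1 x <= - mu)) ->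
  ((forall x, a <= x <= b -> 0 <= g2 x) \/ (forall x, a <= x <= b -> g2 x <= 0)) ->
  Rabs (RInt (fun x => sin (g x)) a b) <= 3 / mu.
Proof.
  intros. replace (RInt (fun x => sin (g x)) a b) with (RInt (fun x => cos (g x + - (PI/2))) a b).
  apply (FDc (fun x => g x + - (PI/2)) g1 g2); auto. apply phase_shift; auto.
  apply RInt_ext; intros; rewrite sin_as_cos; auto.
Qed.

Lemma triv_bound (g : R -> R) a b : a <= b -> (forall x, continuous g x) ->
  Rabs (RInt (fun x => cos (g x)) a b) <= b - a.
Proof. intros Hab Hc. rewrite <- (Rmult_1_r (b - a)). apply abs_RInt_le_const; auto.
  apply exR; intros; apply cR_cos; auto. intros; apply Rabs_le; apply COS_bound. Qed.

Lemma mvt_lower g1 g2 a x lam : (forall y, is_derive g1 y (g2 y)) -> a <= x ->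
  (forall y, a <= y <= x -> lam <= g2 y) -> g1 a + lam * (x - a) <= g1 x.
Proof. intros Hd Hax Hl.
  destruct (MVT_gen g1 a x g2) as [c [Hc Hm]].
  - intros; apply Hd.
  - intros; apply continuity_pt_filterlim. apply (der_cont g1 g2 Hd).
  - rewrite Rmin_left, Rmax_right in Hc by lra. specialize (Hl c Hc). nra.
Qed.

Lemma SD1 g g1 g2 a b lam : phase g g1 g2 -> a <= b -> 0 < lam ->
  (forall x, a <= x <= b -> lam <= g2 x) -> 0 <= g1 a ->
  Rabs (RInt (fun x => cos (g x)) a b) <= 4 / sqrt lam.
Proof.
  intros Hp Hab Hl Hg2 Hg1a. pose proof Hp as [Hd1 [Hd2 Hc2]].
  assert (Hc0 := der_cont g g1 Hd1).
  pose proof (sqrt_lt_R0 lam Hl) as Hsq. pose proof (sqrt_sqrt lam (Rlt_le _ _ Hl)) as Hss.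
  set (d := / sqrt lam). assert (Hdd : / sqrt lam = d) by reflexivity. clearbody d.
  assert (Hd : 0 < d) by (rewrite <- Hdd; apply Rinv_0_lt_compat; auto).
  destruct (Rle_dec b (a + d)).
  - eapply Rle_trans. apply triv_bound; auto. unfold Rdiv; rewrite Hdd; lra.
  - set (c := a + d).
    rewrite <- (RInt_Chasles (V:=R_CompleteNormedModule) (fun x => cos (g x)) a c b).
    2,3: apply exR; intros; apply cR_cos; auto.
    change (plus ?x ?y) with (x + y).
    eapply Rle_trans. apply Rabs_triang.
    assert (Rabs (RInt (fun x => cos (g x)) a c) <= d). { eapply Rle_trans. apply triv_bound; auto. unfold c; lra. unfold c; lra. }
    assert (Rabs (RInt (fun x => cos (g x)) c b) <= 3 / sqrt lam).
    { apply (FDc g g1 g2); auto. unfold c; lra.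
      left. intros x Hx. pose proof (mvt_lower g1 g2 a x lam Hd2 ltac:(unfold c in Hx; lra)
        ltac:(intros y Hy; apply Hg2; unfold c in Hx; lra)).
      assert (lam * d = sqrt lam). { rewrite <- Hdd. rewrite <- Hss at 1. field. lra. }
      unfold c in Hx. nra.
      left; intros x Hx; apply Rle_trans with lam; [lra|]. apply Hg2. unfold c in Hx; lra. }
    unfold Rdiv in *. rewrite Hdd in *. lra.
Qed.

Lemma mvt_upper g1 g2 x b lam : (forall y, is_derive g1 y (g2 y)) -> x <= b ->
  (forall y, x <= y <= b -> lam <= g2 y) -> g1 x <= g1 b - lam * (b - x).
Proof. intros Hd Hax Hl.
  destruct (MVT_gen g1 x b g2) as [c [Hc Hm]].
  - intros; apply Hd.
  - intros; apply continuity_pt_filterlim. apply (der_cont g1 g2 Hd).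
  - rewrite Rmin_left, Rmax_right in Hc by lra. specialize (Hl c Hc). nra.
Qed.

Lemma SD2 g g1 g2 a b lam : phase g g1 g2 -> a <= b -> 0 < lam ->
  (forall x, a <= x <= b -> lam <= g2 x) -> g1 b <= 0 ->
  Rabs (RInt (fun x => cos (g x)) a b) <= 4 / sqrt lam.
Proof.
  intros Hp Hab Hl Hg2 Hg1b. pose proof Hp as [Hd1 [Hd2 Hc2]].
  assert (Hc0 := der_cont g g1 Hd1).
  pose proof (sqrt_lt_R0 lam Hl) as Hsq. pose proof (sqrt_sqrt lam (Rlt_le _ _ Hl)) as Hss.
  set (d := / sqrt lam). assert (Hdd : / sqrt lam = d) by reflexivity. clearbody d.
  assert (Hd : 0 < d) by (rewrite <- Hdd; apply Rinv_0_lt_compat; auto).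
  destruct (Rle_dec (b - d) a).
  - eapply Rle_trans. apply triv_bound; auto. unfold Rdiv; rewrite Hdd; lra.
  - set (c := b - d).
    rewrite <- (RInt_Chasles (V:=R_CompleteNormedModule) (fun x => cos (g x)) a c b).
    2,3: apply exR; intros; apply cR_cos; auto.
    change (plus ?x ?y) with (x + y).
    eapply Rle_trans. apply Rabs_triang.
    assert (Rabs (RInt (fun x => cos (g x)) c b) <= d). { eapply Rle_trans. apply triv_bound; auto. unfold c; lra. unfold c; lra. }
    assert (Rabs (RInt (fun x => cos (g x)) a c) <= 3 / sqrt lam).
    { apply (FDc g g1 g2); auto. unfold c; lra.
      right. intros x Hx. pose proof (mvt_upper g1 g2 x b lam Hd2 ltac:(unfold c in Hx; lra)
        ltac:(intros y Hy; apply Hg2; unfold c in Hx; lra)).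
      assert (lam * d = sqrt lam). { rewrite <- Hdd. rewrite <- Hss at 1. field. lra. }
      unfold c in Hx. nra.
      left; intros x Hx; apply Rle_trans with lam; [lra|]. apply Hg2. unfold c in Hx; lra. }
    unfold Rdiv in *. rewrite Hdd in *. lra.
Qed.

Lemma SDc_pos g g1 g2 a b lam : phase g g1 g2 -> a <= b -> 0 < lam ->
  (forall x, a <= x <= b -> lam <= g2 x) ->
  Rabs (RInt (fun x => cos (g x)) a b) <= 8 / sqrt lam.
Proof.
  intros Hp Hab Hl Hg2. pose proof Hp as [Hd1 [Hd2 Hc2]].
  assert (Hc0 := der_cont g g1 Hd1). assert (Hc1 := der_cont g1 g2 Hd2).
  pose proof (sqrt_lt_R0 lam Hl).
  assert (4 / sqrt lam <= 8 / sqrt lam). { unfold Rdiv. apply Rmult_le_compat_r. left; apply Rinv_0_lt_compat; auto. lra. }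
  destruct (Rle_dec 0 (g1 a)). { apply Rle_trans with (4 / sqrt lam); [apply (SD1 g g1 g2); auto|lra]. }
  destruct (Rle_dec (g1 b) 0). { apply Rle_trans with (4 / sqrt lam); [apply (SD2 g g1 g2); auto|lra]. }
  destruct (IVT g1 a b) as [c [Hc Hz]].
  - intros x; apply (proj2 (continuity_pt_filterlim g1 x)); apply Hc1.
  - destruct (Rle_lt_or_eq_dec a b Hab); [auto | subst; lra].
  - apply Rnot_le_lt; auto.
  - apply Rnot_le_lt; auto.
  - rewrite <- (RInt_Chasles (V:=R_CompleteNormedModule) (fun x => cos (g x)) a c b).
    2,3: apply exR; intros; apply cR_cos; auto.
    change (plus ?x ?y) with (x + y).
    eapply Rle_trans. apply Rabs_triang.
    assert (Rabs (RInt (fun x => cos (g x)) a c) <= 4 / sqrt lam).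
    { apply (SD2 g g1 g2); auto. lra. intros; apply Hg2; lra. lra. }
    assert (Rabs (RInt (fun x => cos (g x)) c b) <= 4 / sqrt lam).
    { apply (SD1 g g1 g2); auto. lra. intros; apply Hg2; lra. lra. }
    unfold Rdiv in *. lra.
Qed.

Lemma SDc g g1 g2 a b lam : phase g g1 g2 -> a <= b -> 0 < lam ->
  ((forall x, a <= x <= b -> lam <= g2 x) \/ (forall x, a <= x <= b -> g2 x <= - lam)) ->
  Rabs (RInt (fun x => cos (g x)) a b) <= 8 / sqrt lam.
Proof.
  intros Hp Hab Hl [Hg|Hg].
  - eapply SDc_pos; eauto.
  - replace (RInt (fun x => cos (g x)) a b) with (RInt (fun x => cos (- g x)) a b).
    apply (SDc_pos (fun x => - g x) (fun x => - g1 x) (fun x => - g2 x)); auto. apply phase_opp; auto.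
    intros x Hx; specialize (Hg x Hx); lra.
    apply RInt_ext; intros; rewrite cos_neg; auto.
Qed.

Lemma SDs g g1 g2 a b lam : phase g g1 g2 -> a <= b -> 0 < lam ->
  ((forall x, a <= x <= b -> lam <= g2 x) \/ (forall x, a <= x <= b -> g2 x <= - lam)) ->
  Rabs (RInt (fun x => sin (g x)) a b) <= 8 / sqrt lam.
Proof.
  intros. replace (RInt (fun x => sin (g x)) a b) with (RInt (fun x => cos (g x + - (PI/2))) a b).
  apply (SDc (fun x => g x + - (PI/2)) g1 g2); auto. apply phase_shift; auto.
  apply RInt_ext; intros; rewrite sin_as_cos; auto.
Qed.

Lemma s5 : 19/100 <= sin (1/5).
Proof. pose proof PI2_1. pose proof (SIN (1/5) ltac:(lra) ltac:(lra)). unfold sin_lb, sin_approx, sin_term in H0. simpl in H0. lra. Qed.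
Lemma k5 : 98/100 <= cos (1/5).
Proof. pose proof PI2_1. pose proof (COS (1/5) ltac:(lra) ltac:(lra)). unfold cos_lb, cos_approx, cos_term in H0. simpl in H0. lra. Qed.

Lemma cos_abs x : cos x = cos (Rabs x).
Proof. unfold Rabs; destruct (Rcase_abs x); auto. rewrite cos_neg; auto. Qed.

Lemma T3 x : Rabs x <= PI/2 - 1/5 -> sin (1/5) <= cos x.
Proof. intros H. pose proof PI2_1. rewrite cos_abs. rewrite <- cos_shift.
  apply cos_decr_1; try lra. apply Rabs_pos. Qed.
Lemma T4 x : PI/2 + 1/5 <= Rabs x <= PI -> cos x <= - sin (1/5).
Proof. intros H. pose proof PI2_1. rewrite cos_abs.
  replace (- sin (1/5)) with (cos (PI/2 + 1/5)).
  apply cos_decr_1; lra.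
  rewrite cos_plus, cos_PI2, sin_PI2. ring. Qed.
Lemma T1 x : Rabs (x - PI/2) <= 1/5 -> cos (1/5) <= sin x.
Proof. intros H. pose proof PI2_1.
  replace (sin x) with (cos (Rabs (x - PI/2))).
  apply cos_decr_1; try lra. apply Rabs_pos.
  rewrite <- cos_abs. rewrite <- cos_neg. replace (- (x - PI/2)) with (PI/2 - x) by ring.
  apply cos_shift. Qed.
Lemma T2 x : Rabs (x + PI/2) <= 1/5 -> sin x <= - cos (1/5).
Proof. intros H. pose proof (T1 (- x)). rewrite sin_neg in H0.
  replace (- x - PI/2) with (- (x + PI/2)) in H0 by ring. rewrite Rabs_Ropp in H0. lra. Qed.

Lemma split_int (f : R -> R) a b c : (forall x, continuous f x) ->
  RInt f a b = RInt f a c + RInt f c b.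
Proof. intros H. symmetry. apply (RInt_Chasles (V:=R_CompleteNormedModule)); apply exR; intros; auto. Qed.

Lemma osc_bound (t : R) (m : Z) (g : R -> R) : 0 < t -> Rabs (IZR m) <= 19/10 * t ->
  phase g (fun x => -2 * t * sin x + IZR m) (fun x => -2 * t * cos x) ->
  Rabs (RInt (fun x => cos (g x)) (- PI) PI) <= 3 * (8 / sqrt (2 * t * sin (1/5))) + 4 * (3 / (3 * t / 50)).
Proof.
  intros Ht Hm Hp.
  set (lam := 2 * t * sin (1/5)). set (mu := 3 * t / 50).
  pose proof PI2_1 as Hpi. pose proof s5. pose proof k5.
  assert (Hl : 0 < lam) by (unfold lam; nra). assert (Hmu : 0 < mu) by (unfold mu; lra).
  assert (Hc : forall x, continuous (fun x => cos (g x)) x).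
  { intros; apply cR_cos. destruct Hp as [Hd _]. apply (der_cont g _ Hd). }
  set (b1 := PI/2 - 1/5). set (b2 := PI/2 + 1/5).
  set (F := fun x => cos (g x)).
  rewrite (split_int F (-PI) PI (-b2)), (split_int F (-b2) PI (-(PI/2))),
    (split_int F (-(PI/2)) PI (-b1)), (split_int F (-b1) PI b1), (split_int F b1 PI (PI/2)),
    (split_int F (PI/2) PI b2); auto.
  apply Rabs_le_between in Hm.
  assert (A1 : Rabs (RInt F (-PI) (-b2)) <= 8 / sqrt lam).
  { apply (SDc g (fun x => -2 * t * sin x + IZR m) (fun x => -2 * t * cos x)); auto. unfold b2; lra. left. intros x Hx.
    assert (cos x <= - sin (1/5)). apply T4. rewrite Rabs_left by (unfold b2 in Hx; lra). unfold b2 in Hx; lra.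
    unfold lam; nra. }
  assert (A2 : Rabs (RInt F (-b2) (-(PI/2))) <= 3 / mu).
  { apply (FDc g (fun x => -2 * t * sin x + IZR m) (fun x => -2 * t * cos x)); auto. unfold b2; lra.
    left. intros x Hx. assert (sin x <= - cos (1/5)). apply T2. apply Rabs_le; unfold b2 in Hx; lra.
    unfold mu; nra.
    left. intros x Hx. assert (cos x <= 0). rewrite <- cos_neg. apply cos_le_0; unfold b2 in Hx; lra. nra. }
  assert (A3 : Rabs (RInt F (-(PI/2)) (-b1)) <= 3 / mu).
  { apply (FDc g (fun x => -2 * t * sin x + IZR m) (fun x => -2 * t * cos x)); auto. unfold b1; lra.
    left. intros x Hx. assert (sin x <= - cos (1/5)). apply T2. apply Rabs_le; unfold b1 in Hx; lra.
    unfold mu; nra.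
    right. intros x Hx. assert (0 <= cos x). apply cos_ge_0; unfold b1 in Hx; lra. nra. }
  assert (A4 : Rabs (RInt F (-b1) b1) <= 8 / sqrt lam).
  { apply (SDc g (fun x => -2 * t * sin x + IZR m) (fun x => -2 * t * cos x)); auto. unfold b1; lra. right. intros x Hx.
    assert (sin (1/5) <= cos x). apply T3. apply Rabs_le; unfold b1 in Hx; lra.
    unfold lam; nra. }
  assert (A5 : Rabs (RInt F b1 (PI/2)) <= 3 / mu).
  { apply (FDc g (fun x => -2 * t * sin x + IZR m) (fun x => -2 * t * cos x)); auto. unfold b1; lra.
    right. intros x Hx. assert (cos (1/5) <= sin x). apply T1. apply Rabs_le; unfold b1 in Hx; lra.
    unfold mu; nra.
    right. intros x Hx. assert (0 <= cos x). apply cos_ge_0; unfold b1 in Hx; lra. nra. }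
  assert (A6 : Rabs (RInt F (PI/2) b2) <= 3 / mu).
  { apply (FDc g (fun x => -2 * t * sin x + IZR m) (fun x => -2 * t * cos x)); auto. unfold b2; lra.
    right. intros x Hx. assert (cos (1/5) <= sin x). apply T1. apply Rabs_le; unfold b2 in Hx; lra.
    unfold mu; nra.
    left. intros x Hx. assert (cos x <= 0). apply cos_le_0; unfold b2 in Hx; lra. nra. }
  assert (A7 : Rabs (RInt F b2 PI) <= 8 / sqrt lam).
  { apply (SDc g (fun x => -2 * t * sin x + IZR m) (fun x => -2 * t * cos x)); auto. unfold b2; lra. left. intros x Hx.
    assert (cos x <= - sin (1/5)). apply T4. rewrite Rabs_right by (unfold b2 in Hx; lra). unfold b2 in Hx; lra.
    unfold lam; nra. }
  set (I1 := RInt F (-PI) (-b2)) in *. set (I2 := RInt F (-b2) (-(PI/2))) in *.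
  set (I3 := RInt F (-(PI/2)) (-b1)) in *. set (I4 := RInt F (-b1) b1) in *.
  set (I5 := RInt F b1 (PI/2)) in *. set (I6 := RInt F (PI/2) b2) in *. set (I7 := RInt F b2 PI) in *.
  pose proof (Rabs_triang I1 (I2+(I3+(I4+(I5+(I6+I7)))))).
  pose proof (Rabs_triang I2 (I3+(I4+(I5+(I6+I7))))).
  pose proof (Rabs_triang I3 (I4+(I5+(I6+I7)))).
  pose proof (Rabs_triang I4 (I5+(I6+I7))).
  pose proof (Rabs_triang I5 (I6+I7)).
  pose proof (Rabs_triang I6 I7).
  lra.
Qed.


Lemma phase_gph t m : phase (gph t m) (fun x => -2 * t * sin x + IZR m) (fun x => -2 * t * cos x).
Proof. split; [|split]; intros x.
  - unfold gph. auto_derive; auto. req2.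
  - auto_derive; auto. req2.
  - apply cR_mult. apply cR_const. apply cR_cos, cR_id.
Qed.

Lemma Cmod_le_sum (z : C) : Cmod z <= Rabs (fst z) + Rabs (snd z).
Proof. destruct z as [a b]. unfold Cmod; cbn [fst snd].
  rewrite <- (sqrt_pow2 (Rabs a + Rabs b)) by (pose proof (Rabs_pos a); pose proof (Rabs_pos b); lra).
  apply sqrt_le_1_alt. rewrite <- (pow2_abs a), <- (pow2_abs b).
  pose proof (Rabs_pos a); pose proof (Rabs_pos b). nra. Qed.

Lemma osc_simpl t : 1/4 <= t ->
  3 * (8 / sqrt (2 * t * sin (1/5))) + 4 * (3 / (3 * t / 50)) <= 440 / sqrt t.
Proof.
  intros Ht. pose proof s5.
  set (u := sqrt t). assert (Hu : 0 < u) by (apply sqrt_lt_R0; lra).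
  assert (Htu : t = u * u) by (unfold u; rewrite sqrt_sqrt; lra).
  assert (Hu2 : 1/2 <= u). { unfold u. rewrite <- (sqrt_pow2 (1/2)) by lra. apply sqrt_le_1_alt. nra. }
  set (q := sqrt (2 * sin (1/5))).
  assert (Hq : 6/10 <= q). { unfold q. rewrite <- (sqrt_pow2 (6/10)) by lra. apply sqrt_le_1_alt. nra. }
  assert (Hsl : sqrt (2 * t * sin (1/5)) = q * u).
  { unfold q, u. rewrite <- sqrt_mult by lra. f_equal; ring. }
  rewrite Hsl. rewrite Htu.
  assert (24 / (q * u) <= 40 / u).
  { replace (24 / (q * u)) with ((24 / q) / u) by (field; lra).
    unfold Rdiv at 1 3. apply Rmult_le_compat_r. left; apply Rinv_0_lt_compat; lra.
    unfold Rdiv. apply Rle_trans with (24 * / (6/10)).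
    apply Rmult_le_compat_l. lra. apply Rinv_le_contravar; lra. lra. }
  assert (200 / (u * u) <= 400 / u).
  { replace (200 / (u * u)) with ((200 / u) / u) by (field; lra).
    unfold Rdiv at 1 3. apply Rmult_le_compat_r. left; apply Rinv_0_lt_compat; lra.
    unfold Rdiv. apply Rle_trans with (200 * / (1/2)).
    apply Rmult_le_compat_l. lra. apply Rinv_le_contravar; lra. lra. }
  replace (3 * (8 / (q * u)) + 4 * (3 / (3 * (u * u) / 50))) with (24 / (q * u) + 200 / (u * u))
    by (field; split; lra).
  replace (440 / u) with (40 / u + 400 / u) by (field; lra). lra.
Qed.

Lemma sup_bound t m : 1/4 <= t -> Rabs (IZR m) <= 19/10 * t ->
  Cmod (cf m (fF t)) <= 150 / sqrt t.
Proof.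
  intros Ht Hm.
  assert (HA : Rabs (RI (fun x => cos (gph t m x))) <= 440 / sqrt t).
  { eapply Rle_trans. apply (osc_bound t m (gph t m)); auto. lra. apply phase_gph. apply osc_simpl; auto. }
  assert (HB : Rabs (RI (fun x => sin (gph t m x))) <= 440 / sqrt t).
  { unfold RI. replace (RInt (fun x => sin (gph t m x)) (-PI) PI) with
      (RInt (fun x => cos (gph t m x + - (PI/2))) (-PI) PI).
    eapply Rle_trans. apply (osc_bound t m (fun x => gph t m x + - (PI/2))); auto. lra.
    apply phase_shift, phase_gph. apply osc_simpl; auto.
    apply RInt_ext; intros; rewrite sin_as_cos; auto. }
  rewrite cf_fF, Cmod_mult, Cmod_R. eapply Rle_trans.
  apply Rmult_le_compat_l. apply Rabs_pos. apply Cmod_le_sum. simpl fst; simpl snd.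
  pose proof PI_RGT_0. pose proof PI2_3_2.
  rewrite Rabs_right by (left; apply Rinv_0_lt_compat; lra).
  assert (0 < sqrt t) by (apply sqrt_lt_R0; lra).
  apply Rle_trans with (/ (2 * PI) * (880 / sqrt t)).
  apply Rmult_le_compat_l. left; apply Rinv_0_lt_compat; lra. lra.
  unfold Rdiv. rewrite <- Rmult_assoc. apply Rmult_le_compat_r. left; apply Rinv_0_lt_compat; lra.
  apply Rle_trans with (/ 6 * 880). apply Rmult_le_compat_r. lra. apply Rinv_le_contravar; lra. lra.
Qed.

Lemma is_series_fin {K : AbsRing} {V : NormedModule K} (u : nat -> V) N :
  (forall k, (N < k)%nat -> u k = zero) -> is_series u (sum_n u N).
Proof.
  intros H. unfold is_series.
  apply (filterlim_ext_loc (fun _ => sum_n u N)).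
  - exists N. intros n Hn. induction n.
    + assert (N = 0%nat) by lia. subst; auto.
    + destruct (Nat.eq_dec N (S n)) as [->|Hne]; auto.
      rewrite sum_Sn, <- IHn by lia. rewrite H by lia. rewrite plus_zero_r. auto.
  - apply filterlim_const.
Qed.

Lemma sum_n_RtoC (g : nat -> R) n : @sum_n C_AbelianMonoid (fun k => RtoC (g k)) n = RtoC (sum_n g n).
Proof. induction n.
  - rewrite !sum_O. auto.
  - rewrite !sum_Sn, IHn. change (plus (RtoC (sum_n g n)) (RtoC (g (S n))) = RtoC (sum_n g n + g (S n))).
    rewrite RtoC_plus. auto.
Qed.

Lemma sum_split (F : Z -> R) K :
  sum_n (fun k => F (- Z.of_nat k)%Z) K + sum_n (fun k => F (Z.of_nat (S k))) K = zsR K F + F (Z.of_nat (S K)).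
Proof. induction K.
  - rewrite !sum_O. simpl. auto.
  - rewrite !sum_Sn. change (plus ?x ?y) with (x + y). cbn [zsR].
    replace (sum_n (fun k => F (- Z.of_nat k)%Z) K + F (- Z.of_nat (S K))%Z +
      (sum_n (fun k => F (Z.of_nat (S k))) K + F (Z.of_nat (S (S K)))))
    with ((sum_n (fun k => F (- Z.of_nat k)%Z) K + sum_n (fun k => F (Z.of_nat (S k))) K)
      + F (- Z.of_nat (S K))%Z + F (Z.of_nat (S (S K)))) by ring.
    rewrite IHK. ring.
Qed.

Lemma zsR_term M (F : Z -> R) m : (forall k, 0 <= F k) -> (Z.abs m <= Z.of_nat M)%Z -> F m <= zsR M F.
Proof. intros H. induction M; intros Hm; cbn [zsR].
  - assert (m = 0%Z) by lia. subst; lra.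
  - destruct (Z.eq_dec (Z.abs m) (Z.of_nat (S M))).
    + pose proof (zsR_nonneg M F H). pose proof (H (Z.of_nat (S M))). pose proof (H (- Z.of_nat (S M))%Z).
      destruct (Z.abs_spec m) as [[_ Hx]|[_ Hx]].
      * replace m with (Z.of_nat (S M)) by lia. lra.
      * replace m with (- Z.of_nat (S M))%Z by lia. lra.
    + pose proof (IHM ltac:(lia)). pose proof (H (Z.of_nat (S M))). pose proof (H (- Z.of_nat (S M))%Z). lra.
Qed.

Lemma Kc_le1 t m : Cmod (cf m (fF t)) <= 1.
Proof.
  pose proof (bessel (Z.abs_nat m) (fF t) (cc_fF t)). rewrite nrm_fF in H.
  pose proof (zsR_term (Z.abs_nat m) (fun m => n2 (cf m (fF t))) m ltac:(intros; unfold n2; nra) ltac:(lia)).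
  pose proof PI_RGT_0. cbv beta in H0. rewrite n2_Cmod in H0.
  assert (Cmod (cf m (fF t)) ^ 2 <= 1) by nra. pose proof (Cmod_ge_0 (cf m (fF t))). nra.
Qed.

Definition ph (z : C) : C := if Req_EM_T (Cmod z) 0 then RtoC 0 else (RtoC (/ Cmod z) * Cconj z)%C.

Lemma ph_le1 z : Cmod (ph z) <= 1.
Proof. unfold ph. destruct (Req_EM_T (Cmod z) 0). rewrite Cmod_0; lra.
  rewrite Cmod_mult, Cmod_conj, Cmod_R. pose proof (Cmod_ge_0 z).
  rewrite Rabs_right by (left; apply Rinv_0_lt_compat; lra). rewrite Rinv_l; lra. Qed.

Lemma ph_mul z : (ph z * z)%C = RtoC (Cmod z).
Proof. unfold ph. destruct (Req_EM_T (Cmod z) 0).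
  - rewrite e. apply Cmod_eq_0 in e. rewrite e. ring.
  - rewrite <- Cmult_assoc. rewrite (Cmult_comm (Cconj z)). rewrite <- Cmod2_conj.
    rewrite <- RtoC_mult. f_equal. field; auto.
Qed.

Lemma choose_K t : 0 < t -> exists K : nat, 19/10 * t <= INR K /\ (2 * t) ^ S K / INR (fact (S K)) <= 1/10.
Proof.
  intros Ht. destruct (cv_speed_pow_fact (2 * t) (1/10) ltac:(lra)) as [N HN].
  destruct (archimed (19/10 * t)) as [Hu _].
  assert (Hup : (0 <= up (19/10 * t))%Z). { apply le_IZR. lra. }
  exists (N + Z.to_nat (up (19/10 * t)))%nat. split.
  - rewrite plus_INR. replace (INR (Z.to_nat (up (19/10 * t)))) with (IZR (up (19/10 * t)))
      by (rewrite INR_IZR_INZ, Z2Nat.id; auto). pose proof (pos_INR N). lra.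
  - specialize (HN (S (N + Z.to_nat (up (19 / 10 * t)))) ltac:(lia)). unfold R_dist in HN.
    rewrite Rminus_0_r in HN. apply Rabs_lt_between in HN. lra.
Qed.

Lemma main_pos t : 0 < t -> exists a : Z -> C, (forall j, Cmod (a j) <= 1) /\
  exists v, schr_value a t 0 v /\ / 400 * sqrt t <= Cmod v.
Proof.
  intros Ht. set (r := 19/10 * t). assert (Hr : 0 < r) by (unfold r; lra).
  destruct (choose_K t Ht) as [K [HK1 HK2]]. fold r in HK1.
  set (Kc := fun m => schr_kernel t m).
  assert (HKc : forall m, Kc m = cf m (fF t)) by (intros; apply kernel_cf).
  set (w := fun m : Z => if Rle_dec (Rabs (IZR m)) r then 1 else 0).
  set (F := fun m => w m * Cmod (Kc m)).
  assert (HF0 : forall m, 0 <= F m).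
  { intros m; unfold F, w. destruct Rle_dec; pose proof (Cmod_ge_0 (Kc m)); lra. }
  set (a := fun j : Z => if Rle_dec (Rabs (IZR j)) r then ph (Kc (- j)%Z) else RtoC 0).
  exists a. split.
  { intros j; unfold a. destruct Rle_dec. apply ph_le1. rewrite Cmod_0; lra. }
  exists (RtoC (sum_n (fun k => F (- Z.of_nat k)%Z) K + sum_n (fun k => F (Z.of_nat (S k))) K)).
  split.
  - exists (RtoC (sum_n (fun k => F (- Z.of_nat k)%Z) K)), (RtoC (sum_n (fun k => F (Z.of_nat (S k))) K)).
    split; [|split].
    + apply (is_series_ext (fun k => RtoC (F (- Z.of_nat k)%Z))).
      { intros k. unfold F, w, a. replace (0 - Z.of_nat k)%Z with (- Z.of_nat k)%Z by lia.
        change (schr_kernel t (- Z.of_nat k)%Z) with (Kc (- Z.of_nat k)%Z). rewrite opp_IZR, Rabs_Ropp.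
        destruct Rle_dec. rewrite ph_mul, Rmult_1_l. auto. ceq. }
      rewrite <- sum_n_RtoC. refine (is_series_fin (K:=C_AbsRing) (V:=C_NormedModule) _ K _). intros k Hk. unfold F, w.
      destruct Rle_dec as [Hle|]. 
      * exfalso. rewrite opp_IZR, Rabs_Ropp, <- INR_IZR_INZ, Rabs_right in Hle by (apply Rle_ge, pos_INR).
        apply lt_INR in Hk. lra.
      * apply injective_projections; simpl; ring.
    + apply (is_series_ext (fun k => RtoC (F (Z.of_nat (S k))))).
      { intros k. unfold F, w, a. rewrite Nat2Z.inj_succ. unfold Z.succ.
        rewrite Z.opp_involutive, Z.add_0_l, opp_IZR, Rabs_Ropp.
        destruct Rle_dec. rewrite ph_mul, Rmult_1_l. auto. ceq. }
      rewrite <- sum_n_RtoC. refine (is_series_fin (K:=C_AbsRing) (V:=C_NormedModule) _ K _). intros k Hk. unfold F, w.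
      destruct Rle_dec as [Hle|].
      * exfalso. rewrite <- INR_IZR_INZ, Rabs_right in Hle by (apply Rle_ge, pos_INR).
        assert (S K < S k)%nat by lia. apply lt_INR in H. rewrite S_INR in H. lra.
      * apply injective_projections; simpl; ring.
    + rewrite RtoC_plus. auto.
  - rewrite sum_split. rewrite Cmod_R.
    pose proof (HF0 (Z.of_nat (S K))). pose proof (zsR_nonneg K F HF0).
    rewrite Rabs_right by lra.
    assert (Hmass : 99/100 <= zsR K (fun m => n2 (Kc m))).
    { pose proof (mass t K ltac:(lra)).
      replace (fun m => n2 (Kc m)) with (fun m => n2 (cf m (fF t))) by
        (apply functional_extensionality; intros; rewrite HKc; auto).
      assert (0 <= (2 * t) ^ S K / INR (fact (S K))).
      { unfold Rdiv. apply Rmult_le_pos. apply pow_le; lra. left; apply Rinv_0_lt_compat, INR_fact_lt_0. }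
      nra. }
    assert (Hmom : zsR K (fun m => IZR m ^ 2 * n2 (Kc m)) <= 2 * t ^ 2).
    { replace (fun m => IZR m ^ 2 * n2 (Kc m)) with (fun m => IZR m ^ 2 * n2 (cf m (fF t))) by
        (apply functional_extensionality; intros; rewrite HKc; auto). apply moment. }
    assert (Htail : zsR K (fun m => (1 - w m) * n2 (Kc m)) <= 200/361).
    { apply Rle_trans with (zsR K (fun m => / r ^ 2 * (IZR m ^ 2 * n2 (Kc m)))).
      - apply zsR_le. intros m. unfold w. pose proof (Rlt_le _ _ (pow_lt r 2 Hr)).
        assert (0 <= n2 (Kc m)) by (unfold n2; nra).
        destruct Rle_dec as [Hle|Hle].
        + replace ((1 - 1) * n2 (Kc m)) with 0 by ring. apply Rmult_le_pos.
          left; apply Rinv_0_lt_compat, pow_lt; auto. apply Rmult_le_pos; auto. apply pow2_ge_0.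
        + apply Rnot_le_lt in Hle. rewrite <- (pow2_abs (IZR m)).
          assert (r ^ 2 <= Rabs (IZR m) ^ 2) by (apply pow_incr; lra).
          replace ((1 - 0) * n2 (Kc m)) with (/ r ^ 2 * (r ^ 2 * n2 (Kc m))) by (field; lra).
          apply Rmult_le_compat_l. left; apply Rinv_0_lt_compat, pow_lt; auto. nra.
      - rewrite zsR_scal. apply Rle_trans with (/ r ^ 2 * (2 * t ^ 2)).
        apply Rmult_le_compat_l. left; apply Rinv_0_lt_compat, pow_lt; auto. auto.
        unfold r. right. field. lra. }
    assert (Hwin : 99/100 - 200/361 <= zsR K (fun m => w m * n2 (Kc m))).
    { assert (zsR K (fun m => n2 (Kc m)) = zsR K (fun m => w m * n2 (Kc m)) + zsR K (fun m => (1 - w m) * n2 (Kc m))).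
      { rewrite <- zsR_plus. f_equal. apply functional_extensionality; intros; ring. }
      lra. }
    destruct (Rle_dec (1/4) t) as [Ht4|Ht4].
    + assert (Hs : 0 < sqrt t) by (apply sqrt_lt_R0; lra).
      assert (Hb : zsR K (fun m => w m * n2 (Kc m)) <= 150 / sqrt t * zsR K F).
      { rewrite <- zsR_scal. apply zsR_le. intros m. unfold F, w.
        destruct Rle_dec as [Hle|]; [|lra].
        pose proof (sup_bound t m Ht4 Hle). rewrite <- HKc in H1.
        rewrite n2_Cmod. pose proof (Cmod_ge_0 (Kc m)). nra. }
      assert (150 / sqrt t * (/ 400 * sqrt t) <= 99/100 - 200/361).
      { replace (150 / sqrt t * (/ 400 * sqrt t)) with (150/400) by (field; lra). lra. }
      assert (0 < 150 / sqrt t) by (unfold Rdiv; apply Rmult_lt_0_compat; [lra|apply Rinv_0_lt_compat; lra]).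
      assert (Hfin : 150 / sqrt t * (/ 400 * sqrt t) <= 150 / sqrt t * zsR K F) by lra.
      apply Rmult_le_reg_l in Hfin; auto. lra.
    + assert (Hb : zsR K (fun m => w m * n2 (Kc m)) <= zsR K F).
      { apply zsR_le. intros m. unfold F, w.
        destruct Rle_dec as [Hle|]; [|lra].
        pose proof (Kc_le1 t m). rewrite <- HKc in H1.
        rewrite n2_Cmod. pose proof (Cmod_ge_0 (Kc m)). nra. }
      assert (sqrt t <= 1). { rewrite <- sqrt_1. apply sqrt_le_1_alt. lra. }
      pose proof (sqrt_pos t). lra.
Qed.

Theorem lemmaA :
  exists delta : R, 0 < delta /\
    forall t : R, 0 <= t ->
      exists a : Z -> C,
        (forall j : Z, Cmod (a j) <= 1) /\
        exists v : C, schr_value a t 0%Z v /\ delta * sqrt t <= Cmod v.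
Proof.
  exists (/ 400). split. lra.
  intros t Ht. destruct (Rle_lt_or_eq_dec 0 t Ht) as [Hp|Hz].
  - apply main_pos; auto.
  - subst t. exists (fun _ => RtoC 0). split. intros; rewrite Cmod_0; lra.
    exists (RtoC 0). split.
    + exists (RtoC 0), (RtoC 0). split; [|split].
      * apply (is_series_ext (fun _ => RtoC 0)). intros; apply injective_projections; simpl; ring.
        pose proof (is_series_fin (K:=C_AbsRing) (V:=C_NormedModule) (fun _ => RtoC 0) 0 (fun _ _ => eq_refl)) as HS.
        rewrite sum_O in HS. exact HS.
      * apply (is_series_ext (fun _ => RtoC 0)). intros; apply injective_projections; simpl; ring.
        pose proof (is_series_fin (K:=C_AbsRing) (V:=C_NormedModule) (fun _ => RtoC 0) 0 (fun _ _ => eq_refl)) as HS.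
        rewrite sum_O in HS. exact HS.
      * ring.
    + rewrite sqrt_0, Cmod_0. lra.
Qed.
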